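(* Let $d\ge3$ and let $C,C_1,C_2,\dots\in\mathcal{C}^d_{ar}$ have generators $\psi,\psi_1,\psi_2,\dots$. If $(C_n)$ converges pointwise to $C$, then for every $m\in\{0,1,\dots,d-2\}$ we have $\lim_n\psi_n^{(m)}(z)=\psi^{(m)}(z)$ for every $z\in(0,\infty)$, and $\lim_n D^-\psi_n^{(d-2)}(z)=D^-\psi^{(d-2)}(z)$ for every $z\in\mathrm{Cont}(D^-\psi^{(d-2)})$; moreover in both situations the convergence is continuous, in particular for every sequence $(z_n)$ in $(0,\infty)$ converging to $z\in\mathrm{Cont}(D^-\psi^{(d-2)})$ we have $\lim_n D^-\psi_n^{(d-2)}(z_n)=D^-\psi^{(d-2)}(z)$. Conversely, if $(\psi_n^{(m)})$ converges pointwise to $\psi^{(m)}$ on $(0,\infty)$ for some $m\in\{1,\dots,d-2\}$, then $(C_n)$ converges pointwise to $C$; the same conclusion holds if $\lim_n D^-\psi_n^{(d-2)}(z)=D^-\psi^{(d-2)}(z)$ for every $z\in\mathrm{Cont}(D^-\psi^{(d-2)})$.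
   Context: An Archimedean generator is a continuous non-increasing $\psi:[0,\infty)\to[0,1]$ with $\psi(0)=1$, $\lim_{z\to\infty}\psi(z)=0$, strictly decreasing on $[0,\inf\{z:\psi(z)=0\}]$; pseudo-inverse $\varphi(y)=\inf\{z\in[0,\infty]:\psi(z)=y\}$. $\psi$ is $d$-monotone if $(-1)^{d-2}\psi^{(d-2)}$ exists on $(0,\infty)$ and is non-negative, non-increasing and convex there. $\mathcal{C}^d_{ar}$ is the class of copulas $C(\mathbf{u})=\psi(\varphi(u_1)+\dots+\varphi(u_d))$ with $d$-monotone generator normalized by $\psi(1)=1/2$. $D^-$ denotes the left-hand derivative and $\mathrm{Cont}(g)$ the set of continuity points of $g$. A sequence $(f_n)$ converges continuously to $f$ on a set $S$ if $f_n(z_n)\to f(z)$ for every sequence $z_n\to z\in S$. *)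

(* Defs.v *)
From Stdlib Require Import Reals.
From Coquelicot Require Import Coquelicot.
Open Scope R_scope.

(* Archimedean generator psi : [0,oo) -> [0,1] (values on negative reals are irrelevant). *)
Definition is_generator (psi : R -> R) : Prop :=
  (forall x, 0 <= x ->
     filterlim psi (within (fun y => 0 <= y) (locally x)) (locally (psi x))) /\
  (forall x, 0 <= x -> 0 <= psi x <= 1) /\
  (forall x y, 0 <= x -> x <= y -> psi y <= psi x) /\
  psi 0 = 1 /\
  is_lim psi p_infty 0 /\
  (* strictly decreasing on [0, inf {z : psi z = 0}] (the interval is [0,oo) if the set is empty) *)
  (forall x y,
     0 <= x -> x < y ->
     (forall w, 0 <= w -> psi w = 0 -> y <= w) ->
     psi y < psi x).

(* pseudo-inverse phi(y) = inf { z in [0,oo] : psi z = y }, with psi(oo) = 0;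
   Glb_Rbar of the empty set is p_infty. *)
Definition pinv (psi : R -> R) (y : R) : Rbar :=
  Glb_Rbar (fun z => 0 <= z /\ psi z = y).

Definition psi_bar (psi : R -> R) (x : Rbar) : R :=
  match x with Finite r => psi r | _ => 0 end.

Fixpoint Rbar_sum (f : nat -> Rbar) (d : nat) : Rbar :=
  match d with
  | O => Finite 0
  | S k => Rbar_plus (Rbar_sum f k) (f k)
  end.

Definition arch_copula (d : nat) (psi : R -> R) (u : nat -> R) : R :=
  psi_bar psi (Rbar_sum (fun i => pinv psi (u i)) d).

Definition in_unit_cube (d : nat) (u : nat -> R) : Prop :=
  forall i, (i < d)%nat -> 0 <= u i <= 1.

Definition d_monotone (d : nat) (psi : R -> R) : Prop :=
  is_generator psi /\
  (forall k x, (k < d - 2)%nat -> 0 < x -> ex_derive (Derive_n psi k) x) /\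
  let g := fun x => (-1) ^ (d - 2) * Derive_n psi (d - 2) x in
  (forall x, 0 < x -> 0 <= g x) /\
  (forall x y, 0 < x -> x <= y -> g y <= g x) /\
  (forall x y t, 0 < x -> 0 < y -> 0 <= t <= 1 ->
     g (t * x + (1 - t) * y) <= t * g x + (1 - t) * g y).

Definition ar_generator (d : nat) (psi : R -> R) : Prop :=
  d_monotone d psi /\ psi 1 = / 2.

Definition left_deriv (g : R -> R) (z : R) : R :=
  lim (filtermap (fun x => (g x - g z) / (x - z)) (at_left z)).

Definition cont_conv_at (fs : nat -> R -> R) (f : R -> R) (z : R) : Prop :=
  forall zs : nat -> R, (forall n, 0 < zs n) -> is_lim_seq zs z ->
    is_lim_seq (fun n => fs n (zs n)) (f z).

(* Main.v *)
Require Import Defs.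
From Stdlib Require Import Reals Lra Lia Classical ZArith IndefiniteDescription.
From Coquelicot Require Import Coquelicot.
Open Scope R_scope.

Lemma lim_seq_eps (u : nat -> R) (l : R) :
  (forall eps, 0 < eps -> exists N, forall n, (N <= n)%nat -> Rabs (u n - l) < eps) ->
  is_lim_seq u l.
Proof.
  intros H. apply is_lim_seq_spec. intros [e He]. simpl.
  destruct (H e He) as [N HN]. exists N. exact HN.
Qed.

Lemma lim_seq_eps_inv (u : nat -> R) (l : R) :
  is_lim_seq u l ->
  forall eps, 0 < eps -> exists N, forall n, (N <= n)%nat -> Rabs (u n - l) < eps.
Proof.
  intros H eps He. apply is_lim_seq_spec in H.
  destruct (H (mkposreal eps He)) as [N HN]. exists N. exact HN.
Qed.

Lemma ev2 (P Q : nat -> Prop) :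
  (exists N, forall n, (N <= n)%nat -> P n) ->
  (exists N, forall n, (N <= n)%nat -> Q n) ->
  exists N, forall n, (N <= n)%nat -> P n /\ Q n.
Proof.
  intros [N1 H1] [N2 H2]. exists (max N1 N2). intros n Hn.
  split; [apply H1 | apply H2]; lia.
Qed.

Lemma gen_cont (psi : R -> R) : is_generator psi ->
  forall x eps, 0 <= x -> 0 < eps ->
  exists del, 0 < del /\ forall y, 0 <= y -> Rabs (y - x) < del -> Rabs (psi y - psi x) < eps.
Proof.
  intros [Hc _] x eps Hx He.
  specialize (Hc x Hx).
  apply filterlim_locally with (eps := mkposreal eps He) in Hc.
  destruct Hc as [d Hd]. exists d. split. apply cond_pos.
  intros y Hy Hxy. apply (Hd y). exact Hxy. exact Hy.
Qed.

Lemma gen_range (psi : R -> R) : is_generator psi -> forall x, 0 <= x -> 0 <= psi x <= 1.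
Proof. intros (_ & H & _). exact H. Qed.

Lemma gen_mono (psi : R -> R) : is_generator psi -> forall x y, 0 <= x -> x <= y -> psi y <= psi x.
Proof. intros (_ & _ & H & _). exact H. Qed.

Lemma gen_0 (psi : R -> R) : is_generator psi -> psi 0 = 1.
Proof. intros (_ & _ & _ & H & _). exact H. Qed.

Lemma gen_strict (psi : R -> R) : is_generator psi ->
  forall x y, 0 <= x -> x < y -> 0 < psi x -> psi y < psi x.
Proof.
  intros G x y Hx Hxy Hp. pose proof G as (_ & _ & _ & _ & _ & Hs).
  destruct (classic (forall w, 0 <= w -> psi w = 0 -> y <= w)) as [H|H].
  - apply Hs; auto.
  - apply not_all_ex_not in H. destruct H as [w Hw].
    apply imply_to_and in Hw. destruct Hw as [Hw0 Hw].
    apply imply_to_and in Hw. destruct Hw as [Hw1 Hw].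
    assert (psi y <= psi w) by (apply (gen_mono psi G); lra). lra.
Qed.

Lemma gen_lim (psi : R -> R) : is_generator psi ->
  forall eps, 0 < eps -> exists M, 0 < M /\ psi M < eps.
Proof.
  intros G eps He. pose proof G as (_ & _ & _ & _ & Hl & _).
  apply is_lim_spec in Hl. destruct (Hl (mkposreal eps He)) as [M HM].
  exists (Rmax 1 (M+1)). split. pose proof (Rmax_l 1 (M+1)); lra.
  specialize (HM (Rmax 1 (M+1))). simpl in HM.
  assert (M < Rmax 1 (M + 1)) by (pose proof (Rmax_r 1 (M+1)); lra).
  specialize (HM H). rewrite Rminus_0_r in HM. apply Rabs_lt_between in HM. lra.
Qed.

Lemma clamp_lip a b y y' : a <= b ->
  Rabs (Rmax a (Rmin b y') - Rmax a (Rmin b y)) <= Rabs (y' - y).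
Proof.
  intros Hab. unfold Rmax, Rmin.
  repeat destruct Rle_dec; unfold Rabs; repeat destruct Rcase_abs; lra.
Qed.

Lemma clamp_in a b y : a <= b -> a <= Rmax a (Rmin b y) <= b.
Proof. intros. unfold Rmax, Rmin. repeat destruct Rle_dec; lra. Qed.

Lemma clamp_id a b y : a <= y <= b -> Rmax a (Rmin b y) = y.
Proof. intros. unfold Rmax, Rmin. repeat destruct Rle_dec; lra. Qed.

Lemma phi_exists (psi : R -> R) : is_generator psi ->
  forall x, 0 < x <= 1 -> exists z, 0 <= z /\ psi z = x.
Proof.
  intros G x Hx.
  destruct (Req_dec x 1) as [E|E].
  { exists 0. split. lra. rewrite (gen_0 psi G). lra. }
  destruct (gen_cont psi G 0 (1 - x)) as [d [Hd Hd']]; try lra.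
  assert (Ha : psi (d/2) > x).
  { specialize (Hd' (d/2)). rewrite (gen_0 psi G) in Hd'.
    assert (Rabs (psi (d/2) - 1) < 1 - x) by (apply Hd'; [lra| rewrite Rminus_0_r, Rabs_right; lra]).
    apply Rabs_lt_between in H. lra. }
  destruct (gen_lim psi G x) as [M [HM HM']]; try lra.
  assert (HaM : d/2 < M).
  { destruct (Rlt_le_dec (d/2) M); auto.
    assert (psi (d/2) <= psi M) by (apply (gen_mono psi G); lra). lra. }
  set (f := fun y => psi (Rmax (d/2) (Rmin M y))).
  assert (Hcf : continuity f).
  { intros y. unfold continuity_pt, continue_in, limit1_in, limit_in.
    intros eps Heps. simpl. unfold Rdist.
    set (c := Rmax (d/2) (Rmin M y)).
    assert (Hc : d/2 <= c <= M) by (apply clamp_in; lra).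
    destruct (gen_cont psi G c eps) as [del [Hdel Hdel']]; try lra.
    exists del. split. lra. intros y' [_ Hy']. unfold f.
    apply Hdel'. pose proof (clamp_in (d/2) M y'); lra.
    eapply Rle_lt_trans. apply clamp_lip. lra. exact Hy'. }
  destruct (IVT_gen f (d/2) M x Hcf) as [z [Hz Hfz]].
  { unfold f. rewrite (clamp_id (d/2) M (d/2)) by lra.
    rewrite (clamp_id (d/2) M M) by lra.
    unfold Rmin, Rmax. repeat destruct Rle_dec; lra. }
  rewrite Rmin_left in Hz by lra. rewrite Rmax_right in Hz by lra.
  exists z. split. lra. unfold f in Hfz. rewrite clamp_id in Hfz by lra. exact Hfz.
Qed.

Definition phi (psi : R -> R) (x : R) : R := real (pinv psi x).

Lemma pinv_spec (psi : R -> R) : is_generator psi ->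
  forall x, 0 < x <= 1 ->
  pinv psi x = Finite (phi psi x) /\ 0 <= phi psi x /\ psi (phi psi x) = x.
Proof.
  intros G x Hx. destruct (phi_exists psi G x Hx) as [z [Hz Hpz]].
  assert (Hu : forall w, 0 <= w -> psi w = x -> w = z).
  { intros w Hw Hpw. destruct (Rtotal_order w z) as [H|[H|H]]; auto.
    - pose proof (gen_strict psi G w z Hw H). lra.
    - pose proof (gen_strict psi G z w Hz H). lra. }
  assert (Hp : pinv psi x = Finite z).
  { unfold pinv. apply is_glb_Rbar_unique. split.
    - intros w [Hw Hpw]. rewrite (Hu w Hw Hpw). simpl. lra.
    - intros b Hb. apply Hb. split; auto. }
  unfold phi. rewrite Hp. simpl. auto.
Qed.

Lemma phi_unique (psi : R -> R) : is_generator psi ->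
  forall x z, 0 < x <= 1 -> 0 <= z -> psi z = x -> phi psi x = z.
Proof.
  intros G x z Hx Hz Hpz. destruct (pinv_spec psi G x Hx) as (_ & H1 & H2).
  destruct (Rtotal_order (phi psi x) z) as [H|[H|H]]; auto.
  - pose proof (gen_strict psi G _ _ H1 H). lra.
  - pose proof (gen_strict psi G _ _ Hz H). lra.
Qed.

Lemma phi_le1 (psi : R -> R) : is_generator psi ->
  forall x a, 0 < x <= 1 -> 0 <= a -> x <= psi a -> a <= phi psi x.
Proof.
  intros G x a Hx Ha H. destruct (pinv_spec psi G x Hx) as (_ & H1 & H2).
  destruct (Rle_lt_dec a (phi psi x)); auto.
  pose proof (gen_strict psi G _ _ H1 r). lra.
Qed.

Lemma phi_le2 (psi : R -> R) : is_generator psi ->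
  forall x a, 0 < x <= 1 -> 0 <= a -> psi a <= x -> phi psi x <= a.
Proof.
  intros G x a Hx Ha H. destruct (pinv_spec psi G x Hx) as (_ & H1 & H2).
  destruct (Rle_lt_dec (phi psi x) a); auto.
  assert (psi (phi psi x) <= psi a) by (apply (gen_mono psi G); lra).
  pose proof (gen_strict psi G _ _ Ha r). lra.
Qed.

Lemma phi_1 (psi : R -> R) : is_generator psi -> phi psi 1 = 0.
Proof. intros G. apply phi_unique; auto; try lra. apply gen_0; auto. Qed.

Fixpoint fsum (f : nat -> R) (n : nat) : R :=
  match n with O => 0 | S k => fsum f k + f k end.

Lemma rbar_sum_fin (f : nat -> Rbar) (r : nat -> R) d :
  (forall i, (i < d)%nat -> f i = Finite (r i)) -> Rbar_sum f d = Finite (fsum r d).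
Proof.
  induction d; intros H; simpl. reflexivity.
  rewrite IHd by (intros; apply H; lia). rewrite H by lia. reflexivity.
Qed.

Lemma copula_pos (psi : R -> R) d u : is_generator psi ->
  (forall i, (i < d)%nat -> 0 < u i <= 1) ->
  arch_copula d psi u = psi (fsum (fun i => phi psi (u i)) d).
Proof.
  intros G H. unfold arch_copula.
  rewrite (rbar_sum_fin _ (fun i => phi psi (u i))). reflexivity.
  intros i Hi. apply (pinv_spec psi G). auto.
Qed.

Lemma pinv_ge0 (psi : R -> R) x : Rbar_le 0 (pinv psi x).
Proof.
  unfold pinv. destruct (Glb_Rbar_correct (fun z => 0 <= z /\ psi z = x)) as [_ H].
  apply H. intros w [Hw _]. simpl. exact Hw.
Qed.

Lemma rplus_ge (a b : Rbar) : Rbar_le 0 a -> Rbar_le 0 b ->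
  Rbar_le a (Rbar_plus a b) /\ Rbar_le b (Rbar_plus a b) /\ Rbar_le 0 (Rbar_plus a b).
Proof.
  destruct a, b; simpl; intros; repeat split; try tauto; try lra.
Qed.

Lemma rs_ge (f : nat -> Rbar) d : (forall i, (i < d)%nat -> Rbar_le 0 (f i)) ->
  Rbar_le 0 (Rbar_sum f d) /\ forall i, (i < d)%nat -> Rbar_le (f i) (Rbar_sum f d).
Proof.
  induction d; intros H.
  - split. simpl. lra. intros; lia.
  - destruct IHd as [H1 H2]. intros; apply H; lia.
    destruct (rplus_ge (Rbar_sum f d) (f d) H1 (H d (Nat.lt_succ_diag_r d))) as (A & B & C).
    split. exact C. intros i Hi. simpl.
    destruct (Nat.eq_dec i d) as [->|Hne]. exact B.
    eapply Rbar_le_trans. apply H2. lia. exact A.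
Qed.

Lemma psi_bar_zero (psi : R -> R) : is_generator psi ->
  forall S, Rbar_le (pinv psi 0) S -> psi_bar psi S = 0.
Proof.
  intros G S HS. pose proof (pinv_ge0 psi 0) as H0.
  destruct S as [s| |]. 2: reflexivity.
  2:{ exfalso. destruct (pinv psi 0); simpl in *; tauto. }
  simpl.
  destruct (pinv psi 0) as [r| |] eqn:Er; simpl in HS; try tauto.
  simpl in H0.
  unfold pinv in Er. pose proof (Glb_Rbar_correct (fun z => 0 <= z /\ psi z = 0)) as [Hlb Hg].
  rewrite Er in Hlb, Hg.
  assert (Hr0 : psi r = 0).
  { destruct (gen_range psi G r H0) as [Hp _].
    destruct (Req_dec (psi r) 0) as [E|E]; auto. exfalso.
    destruct (gen_cont psi G r (psi r)) as [del [Hdel Hdel']]; auto; try lra.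
    destruct (classic (exists w, (0 <= w /\ psi w = 0) /\ w < r + del)) as [[w [[Hw Hw'] Hwr]]|Hn].
    - assert (r <= w) by (apply (Hlb w); auto).
      assert (H1 : Rabs (psi w - psi r) < psi r) by (apply Hdel'; auto; rewrite Rabs_right; lra).
      rewrite Hw' in H1. rewrite Rminus_0_l, Rabs_Ropp, Rabs_right in H1; lra.
    - assert (H1 : Rbar_le (r + del) r).
      { apply Hg. intros w Hw. simpl. destruct (Rle_lt_dec (r+del) w); auto.
        exfalso. apply Hn. exists w. auto. }
      simpl in H1. lra. }
  pose proof (gen_mono psi G r s H0 HS). pose proof (gen_range psi G s ltac:(lra)). lra.
Qed.

Lemma copula_zero (psi : R -> R) d u : is_generator psi ->
  (exists i, (i < d)%nat /\ u i = 0) -> arch_copula d psi u = 0.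
Proof.
  intros G [i [Hi Hu]]. unfold arch_copula. apply psi_bar_zero; auto.
  destruct (rs_ge (fun i => pinv psi (u i)) d) as [_ H].
  intros; apply pinv_ge0.
  specialize (H i Hi). simpl in H. rewrite Hu in H. exact H.
Qed.

Lemma fsum_lim (a : nat -> nat -> R) (b : nat -> R) d :
  (forall i, (i < d)%nat -> is_lim_seq (fun n => a n i) (b i)) ->
  is_lim_seq (fun n => fsum (a n) d) (fsum b d).
Proof.
  induction d; intros H; simpl.
  - apply is_lim_seq_const.
  - apply is_lim_seq_plus'. apply IHd. intros; apply H; lia. apply H; lia.
Qed.

Lemma fsum_ge0 (f : nat -> R) d : (forall i, (i < d)%nat -> 0 <= f i) -> 0 <= fsum f d.
Proof.
  induction d; intros H; simpl. lra.
  assert (0 <= fsum f d) by (apply IHd; intros; apply H; lia).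
  assert (0 <= f d) by (apply H; lia). lra.
Qed.

Section Conv0.
Variable psi : R -> R.
Variable psis : nat -> R -> R.
Hypothesis G : is_generator psi.
Hypothesis Gs : forall n, is_generator (psis n).
Hypothesis P0 : forall z, 0 < z -> is_lim_seq (fun n => psis n z) (psi z).

Lemma P0' : forall z, 0 <= z -> is_lim_seq (fun n => psis n z) (psi z).
Proof.
  intros z Hz. destruct (Req_dec z 0) as [->|E]. 2: apply P0; lra.
  rewrite (gen_0 psi G). apply is_lim_seq_ext with (fun _ => 1).
  intros n. rewrite (gen_0 _ (Gs n)). auto. apply is_lim_seq_const.
Qed.

Lemma phi_conv : forall x, 0 < x <= 1 ->
  is_lim_seq (fun n => phi (psis n) x) (phi psi x).
Proof.
  intros x Hx. destruct (Req_dec x 1) as [->|E].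
  { rewrite (phi_1 psi G). apply is_lim_seq_ext with (fun _ => 0).
    intros n. rewrite (phi_1 _ (Gs n)). auto. apply is_lim_seq_const. }
  destruct (pinv_spec psi G x Hx) as (_ & Ha0 & Hpa).
  set (a := phi psi x) in *.
  assert (Ha : 0 < a).
  { destruct (Req_dec a 0) as [E'|E']; [|lra]. rewrite E', (gen_0 psi G) in Hpa. lra. }
  apply lim_seq_eps. intros eps Heps.
  set (del := Rmin (eps/2) (a/2)).
  assert (Hdel : 0 < del /\ del <= eps/2 /\ del <= a/2).
  { unfold del. split. apply Rmin_pos; lra. split. apply Rmin_l. apply Rmin_r. }
  assert (H1 : x < psi (a - del)).
  { rewrite <- Hpa at 1. apply (gen_strict psi G); try lra.
    assert (psi a <= psi (a - del)) by (apply (gen_mono psi G); lra). lra. }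
  assert (H2 : psi (a + del) < x).
  { rewrite <- Hpa. apply (gen_strict psi G); lra. }
  destruct (ev2 _ _ (lim_seq_eps_inv _ _ (P0 (a - del) ltac:(lra)) (psi (a-del) - x) ltac:(lra))
                    (lim_seq_eps_inv _ _ (P0 (a + del) ltac:(lra)) (x - psi (a+del)) ltac:(lra)))
    as [N HN].
  exists N. intros n Hn. destruct (HN n Hn) as [A B].
  apply Rabs_lt_between in A. apply Rabs_lt_between in B.
  assert (a - del <= phi (psis n) x) by (apply (phi_le1 _ (Gs n)); lra).
  assert (phi (psis n) x <= a + del) by (apply (phi_le2 _ (Gs n)); lra).
  apply Rabs_lt_between. lra.
Qed.

Lemma cc0 : forall (s : nat -> R) (s0 : R), (forall n, 0 <= s n) -> is_lim_seq s s0 ->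
  is_lim_seq (fun n => psis n (s n)) (psi s0).
Proof.
  intros s s0 Hs Hlim.
  assert (Hs0 : 0 <= s0).
  { apply (is_lim_seq_le (fun _ => 0) s 0 s0); auto. apply is_lim_seq_const. }
  apply lim_seq_eps. intros eps Heps.
  destruct (gen_cont psi G s0 (eps/2)) as [del [Hdel Hdel']]; try lra.
  set (p := Rmax 0 (s0 - del/2)). set (q := s0 + del/2).
  assert (Hp : 0 <= p /\ s0 - del/2 <= p /\ p <= s0).
  { unfold p. split. apply Rmax_l. split. apply Rmax_r. apply Rmax_lub; lra. }
  assert (Hpp : Rabs (psi p - psi s0) < eps/2) by (apply Hdel'; try lra; apply Rabs_lt_between; lra).
  assert (Hqq : Rabs (psi q - psi s0) < eps/2) by (apply Hdel'; unfold q; try lra; apply Rabs_lt_between; lra).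
  destruct (ev2 _ _ (lim_seq_eps_inv _ _ (P0' p ltac:(lra)) (eps/2) ltac:(lra))
                    (lim_seq_eps_inv _ _ (P0' q ltac:(unfold q; lra)) (eps/2) ltac:(lra)))
    as [N1 HN1].
  destruct (ev2 _ _ (ex_intro _ N1 HN1) (lim_seq_eps_inv _ _ Hlim (del/2) ltac:(lra))) as [N HN].
  exists N. intros n Hn. destruct (HN n Hn) as [[A B] C].
  apply Rabs_lt_between in A. apply Rabs_lt_between in B. apply Rabs_lt_between in C.
  apply Rabs_lt_between in Hpp. apply Rabs_lt_between in Hqq.
  assert (psis n (s n) <= psis n p).
  { apply (gen_mono _ (Gs n)). lra. pose proof (Hs n). unfold p. apply Rmax_lub; lra. }
  assert (psis n q <= psis n (s n)) by (apply (gen_mono _ (Gs n)); [apply Hs | unfold q; lra]).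
  apply Rabs_lt_between. lra.
Qed.

Lemma copula_conv : forall d u, in_unit_cube d u ->
  is_lim_seq (fun n => arch_copula d (psis n) u) (arch_copula d psi u).
Proof.
  intros d u Hu.
  destruct (classic (exists i, (i < d)%nat /\ u i = 0)) as [Hz|Hnz].
  - rewrite (copula_zero psi d u G Hz).
    apply is_lim_seq_ext with (fun _ => 0). intros n. rewrite (copula_zero _ d u (Gs n) Hz). auto.
    apply is_lim_seq_const.
  - assert (Hp : forall i, (i < d)%nat -> 0 < u i <= 1).
    { intros i Hi. destruct (Hu i Hi). split; auto. destruct (Req_dec (u i) 0) as [E|E].
      exfalso; apply Hnz; exists i; auto. lra. }
    rewrite (copula_pos psi d u G Hp).
    apply is_lim_seq_ext with (fun n => psis n (fsum (fun i => phi (psis n) (u i)) d)).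
    intros n. rewrite (copula_pos _ d u (Gs n) Hp). auto.
    apply cc0.
    + intros n. apply fsum_ge0. intros i Hi. apply (pinv_spec _ (Gs n)); auto.
    + apply (fsum_lim (fun n i => phi (psis n) (u i))). intros i Hi. apply phi_conv; auto.
Qed.
End Conv0.

Definition Tc (psi : R -> R) (x y : R) : R := psi (phi psi x + phi psi y).

Lemma T_psi (psi : R -> R) : is_generator psi -> forall a b, 0 <= a -> 0 <= b ->
  0 < psi a -> 0 < psi b -> Tc psi (psi a) (psi b) = psi (a + b).
Proof.
  intros G a b Ha Hb Hpa Hpb. unfold Tc.
  rewrite (phi_unique psi G (psi a) a), (phi_unique psi G (psi b) b); auto.
  split; auto; apply (gen_range psi G); auto.
  split; auto; apply (gen_range psi G); auto.
Qed.

Lemma T_le (psi : R -> R) : is_generator psi -> forall x y a b, 0 < x <= 1 -> 0 < y <= 1 ->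
  0 <= a -> 0 <= b -> x <= psi a -> y <= psi b -> Tc psi x y <= psi (a + b).
Proof.
  intros G x y a b Hx Hy Ha Hb H1 H2. unfold Tc. apply (gen_mono psi G). lra.
  pose proof (phi_le1 psi G x a Hx Ha H1). pose proof (phi_le1 psi G y b Hy Hb H2). lra.
Qed.

Lemma T_ge (psi : R -> R) : is_generator psi -> forall x y a b, 0 < x <= 1 -> 0 < y <= 1 ->
  0 <= a -> 0 <= b -> psi a <= x -> psi b <= y -> psi (a + b) <= Tc psi x y.
Proof.
  intros G x y a b Hx Hy Ha Hb H1 H2. unfold Tc. apply (gen_mono psi G).
  pose proof (pinv_spec psi G x Hx). pose proof (pinv_spec psi G y Hy). lra.
  pose proof (phi_le2 psi G x a Hx Ha H1). pose proof (phi_le2 psi G y b Hy Hb H2). lra.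
Qed.

Lemma ul_lim (u : nat -> R) (l : R) :
  (forall eps, 0 < eps -> exists N, forall n, (N <= n)%nat -> u n < l + eps) ->
  (forall eps, 0 < eps -> exists N, forall n, (N <= n)%nat -> l - eps < u n) ->
  is_lim_seq u l.
Proof.
  intros H1 H2. apply lim_seq_eps. intros eps He.
  destruct (ev2 _ _ (H1 eps He) (H2 eps He)) as [N HN]. exists N. intros n Hn.
  destruct (HN n Hn). apply Rabs_lt_between. lra.
Qed.

Lemma ev_lt (u : nat -> R) (l c : R) : is_lim_seq u l -> l < c ->
  exists N, forall n, (N <= n)%nat -> u n < c.
Proof.
  intros H Hc. destruct (lim_seq_eps_inv u l H (c - l) ltac:(lra)) as [N HN].
  exists N. intros n Hn. specialize (HN n Hn). apply Rabs_lt_between in HN. lra.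
Qed.

Lemma ev_gt (u : nat -> R) (l c : R) : is_lim_seq u l -> c < l ->
  exists N, forall n, (N <= n)%nat -> c < u n.
Proof.
  intros H Hc. destruct (lim_seq_eps_inv u l H (l - c) ltac:(lra)) as [N HN].
  exists N. intros n Hn. specialize (HN n Hn). apply Rabs_lt_between in HN. lra.
Qed.

Section Forward0.
Variable psi : R -> R.
Variable psis : nat -> R -> R.
Hypothesis G : is_generator psi.
Hypothesis Gs : forall n, is_generator (psis n).
Hypothesis HT : forall x y, 0 < x <= 1 -> 0 < y <= 1 ->
  is_lim_seq (fun n => Tc (psis n) x y) (Tc psi x y).

Definition Q z := is_lim_seq (fun n => psis n z) (psi z).

Lemma cont_pt z eps : 0 < z -> 0 < eps -> exists del, 0 < del /\ del < z /\
   forall y, Rabs (y - z) < del -> Rabs (psi y - psi z) < eps.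
Proof.
  intros Hz He. destruct (gen_cont psi G z eps) as [d [Hd Hd']]; try lra.
  exists (Rmin (d/2) (z/2)). assert (Rmin (d/2) (z/2) <= d/2) by apply Rmin_l.
  assert (Rmin (d/2) (z/2) <= z/2) by apply Rmin_r.
  split. apply Rmin_pos; lra. split. lra. intros y Hy. apply Rabs_lt_between in Hy.
  apply Hd'. lra. apply Rabs_lt_between. lra.
Qed.

Lemma Q_sum a b : 0 < a -> 0 < b -> Q a -> Q b -> Q (a + b).
Proof.
  intros Ha Hb Qa Qb. unfold Q in *.
  pose proof (gen_range psi G a) as Ra. pose proof (gen_range psi G b) as Rb.
  pose proof (gen_range psi G (a+b)) as Rab.
  destruct (Req_dec (psi a) 0) as [Ea|Ea].
  { assert (psi (a+b) = 0) by (pose proof (gen_mono psi G a (a+b)); lra).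
    rewrite H. rewrite Ea in Qa. apply is_lim_seq_le_le with (fun _ => 0) (fun n => psis n a).
    intros n. split. apply (gen_range _ (Gs n)); lra. apply (gen_mono _ (Gs n)); lra.
    apply is_lim_seq_const. exact Qa. }
  destruct (Req_dec (psi b) 0) as [Eb|Eb].
  { assert (psi (a+b) = 0) by (pose proof (gen_mono psi G b (a+b)); lra).
    rewrite H. rewrite Eb in Qb. apply is_lim_seq_le_le with (fun _ => 0) (fun n => psis n b).
    intros n. split. apply (gen_range _ (Gs n)); lra. apply (gen_mono _ (Gs n)); lra.
    apply is_lim_seq_const. exact Qb. }
  assert (Pa : 0 < psi a) by (destruct (Ra ltac:(lra)); lra).
  assert (Pb : 0 < psi b) by (destruct (Rb ltac:(lra)); lra).
  apply ul_lim.
  - intros eps He.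
    destruct (cont_pt (a+b) (eps/2)) as [d0 [Hd0 [Hd0' Hc]]]; try lra.
    set (del := Rmin (d0/4) (Rmin (a/2) (b/2))).
    assert (Hdel : 0 < del /\ del <= d0/4 /\ del <= a/2 /\ del <= b/2).
    { unfold del. repeat split. repeat apply Rmin_pos; lra. apply Rmin_l.
      eapply Rle_trans. apply Rmin_r. apply Rmin_l. eapply Rle_trans. apply Rmin_r. apply Rmin_r. }
    set (x := psi (a - del)). set (y := psi (b - del)).
    assert (Hx : psi a < x) by (apply (gen_strict psi G); try lra;
      pose proof (gen_mono psi G (a - del) a); lra).
    assert (Hy : psi b < y) by (apply (gen_strict psi G); try lra;
      pose proof (gen_mono psi G (b - del) b); lra).
    assert (Hx1 : x <= 1) by (apply (gen_range psi G); lra).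
    assert (Hy1 : y <= 1) by (apply (gen_range psi G); lra).
    assert (HTv : Tc psi x y = psi (a - del + (b - del))) by (unfold x, y in *; apply T_psi; auto; lra).
    assert (Hcl : psi (a - del + (b - del)) < psi (a + b) + eps/2).
    { specialize (Hc (a - del + (b - del))). assert (Rabs (psi (a - del + (b - del)) - psi (a+b)) < eps/2).
      apply Hc. apply Rabs_lt_between; lra. apply Rabs_lt_between in H. lra. }
    destruct (ev2 _ _ (ev_lt _ _ _ Qa Hx) (ev_lt _ _ _ Qb Hy)) as [N1 HN1].
    destruct (ev2 _ _ (ex_intro _ N1 HN1)
       (ev_lt _ _ (psi (a + b) + eps) (HT x y ltac:(lra) ltac:(lra)) ltac:(lra))) as [N HN].
    exists N. intros n Hn. destruct (HN n Hn) as [[A B] C].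
    eapply Rle_lt_trans. 2: exact C.
    apply (T_ge _ (Gs n)); lra.
  - intros eps He.
    destruct (Rle_lt_dec (psi (a+b)) 0) as [E0|E0].
    { exists 0%nat. intros n _. pose proof (gen_range _ (Gs n) (a+b)). lra. }
    destruct (cont_pt (a+b) (Rmin (eps/2) (psi (a+b) / 2))) as [d0 [Hd0 [Hd0' Hc]]]; try lra.
    apply Rmin_pos; lra.
    assert (Hm1 : Rmin (eps/2) (psi (a+b) / 2) <= eps/2) by apply Rmin_l.
    assert (Hm2 : Rmin (eps/2) (psi (a+b) / 2) <= psi (a+b)/2) by apply Rmin_r.
    set (del := d0/4).
    set (x := psi (a + del)). set (y := psi (b + del)).
    assert (Hcl : Rabs (psi (a + del + (b + del)) - psi (a+b)) < Rmin (eps/2) (psi (a+b) / 2)).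
    { apply Hc. apply Rabs_lt_between. unfold del; lra. }
    apply Rabs_lt_between in Hcl.
    assert (Hx0 : 0 < x) by (unfold x; pose proof (gen_mono psi G (a+del) (a + del + (b + del))); unfold del in *; lra).
    assert (Hy0 : 0 < y) by (unfold y; pose proof (gen_mono psi G (b+del) (a + del + (b + del))); unfold del in *; lra).
    assert (Hx : x < psi a) by (apply (gen_strict psi G); unfold del; lra).
    assert (Hy : y < psi b) by (apply (gen_strict psi G); unfold del; lra).
    assert (Hx1 : x <= 1) by (apply (gen_range psi G); unfold del; lra).
    assert (Hy1 : y <= 1) by (apply (gen_range psi G); unfold del; lra).
    assert (HTv : Tc psi x y = psi (a + del + (b + del))) by (unfold x, y, del in *; apply T_psi; auto; lra).
    destruct (ev2 _ _ (ev_gt _ _ _ Qa Hx) (ev_gt _ _ _ Qb Hy)) as [N1 HN1].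
    destruct (ev2 _ _ (ex_intro _ N1 HN1)
       (ev_gt _ _ (psi (a + b) - eps) (HT x y ltac:(lra) ltac:(lra)) ltac:(lra))) as [N HN].
    exists N. intros n Hn. destruct (HN n Hn) as [[A B] C].
    eapply Rlt_le_trans. exact C.
    apply (T_le _ (Gs n)); unfold del in *; lra.
Qed.

Lemma Q_half a : 0 < a -> 0 < psi (a + a) -> Q (a + a) -> Q a.
Proof.
  intros Ha P2 Q2. unfold Q in *.
  assert (Pa : psi (a + a) <= psi a) by (apply (gen_mono psi G); lra).
  apply ul_lim.
  - intros eps He.
    destruct (cont_pt a eps) as [d0 [Hd0 [Hd0' Hc]]]; try lra.
    set (a' := a - d0/2).
    assert (Hc' : Rabs (psi a' - psi a) < eps) by (apply Hc; unfold a'; apply Rabs_lt_between; lra).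
    apply Rabs_lt_between in Hc'.
    set (x := psi a').
    assert (Hx0 : 0 < x) by (unfold x; pose proof (gen_mono psi G a' a); unfold a' in *; lra).
    assert (Hx1 : x <= 1) by (apply (gen_range psi G); unfold a'; lra).
    assert (HTv : Tc psi x x = psi (a' + a')) by (unfold x, a' in *; apply T_psi; auto; lra).
    assert (Hs : psi (a + a) < psi (a' + a')).
    { apply (gen_strict psi G); unfold a'; try lra.
      pose proof (gen_mono psi G (a - d0/2 + (a - d0/2)) (a + a)); lra. }
    set (mid := (psi (a + a) + psi (a' + a'))/2).
    destruct (ev2 _ _ (ev_lt _ _ mid Q2 ltac:(unfold mid; lra))
       (ev_gt _ _ mid (HT x x ltac:(lra) ltac:(lra)) ltac:(unfold mid; lra))) as [N HN].
    exists N. intros n Hn. destruct (HN n Hn) as [A B].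
    destruct (Rlt_le_dec (psis n a) x) as [C|C]. unfold x in C; lra.
    exfalso. assert (Tc (psis n) x x <= psis n (a + a)) by (apply (T_le _ (Gs n)); lra). lra.
  - intros eps He.
    destruct (cont_pt a eps) as [d0 [Hd0 [Hd0' Hc]]]; try lra.
    destruct (cont_pt (a+a) (psi (a+a) / 2)) as [d1 [Hd1 [Hd1' Hc1]]]; try lra.
    set (del := Rmin (d0/2) (d1/4)).
    assert (Hdel : 0 < del /\ del <= d0/2 /\ del <= d1/4).
    { unfold del. repeat split. apply Rmin_pos; lra. apply Rmin_l. apply Rmin_r. }
    set (a' := a + del).
    assert (Hc' : Rabs (psi a' - psi a) < eps) by (apply Hc; unfold a'; apply Rabs_lt_between; lra).
    apply Rabs_lt_between in Hc'.
    assert (Hc1' : Rabs (psi (a' + a') - psi (a + a)) < psi (a+a) / 2)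
      by (apply Hc1; unfold a'; apply Rabs_lt_between; lra).
    apply Rabs_lt_between in Hc1'.
    set (x := psi a').
    assert (Hx0 : 0 < x) by (unfold x; pose proof (gen_mono psi G a' (a' + a')); unfold a' in *; lra).
    assert (Hx1 : x <= 1) by (apply (gen_range psi G); unfold a'; lra).
    assert (HTv : Tc psi x x = psi (a' + a')) by (unfold x, a' in *; apply T_psi; auto; lra).
    assert (Hs : psi (a' + a') < psi (a + a)).
    { apply (gen_strict psi G); unfold a'; lra. }
    set (mid := (psi (a + a) + psi (a' + a'))/2).
    destruct (ev2 _ _ (ev_gt _ _ mid Q2 ltac:(unfold mid; lra))
       (ev_lt _ _ mid (HT x x ltac:(lra) ltac:(lra)) ltac:(unfold mid; lra))) as [N HN].
    exists N. intros n Hn. destruct (HN n Hn) as [A B].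
    destruct (Rlt_le_dec x (psis n a)) as [C|C]. unfold x in C; lra.
    exfalso. assert (psis n (a + a) <= Tc (psis n) x x) by (apply (T_ge _ (Gs n)); unfold a' in *; lra). lra.
Qed.

Definition dy (j m : nat) : R := INR j / 2 ^ m.

Hypothesis N1 : psi 1 = / 2.
Hypothesis Ns1 : forall n, psis n 1 = / 2.

Lemma Q_dy1 m : Q (dy 1 m).
Proof.
  induction m.
  - unfold dy, Q. simpl. replace (1/1) with 1 by field. rewrite N1.
    apply is_lim_seq_ext with (fun _ => /2). intros n; rewrite Ns1; auto. apply is_lim_seq_const.
  - assert (E : dy 1 m = dy 1 (S m) + dy 1 (S m)) by (unfold dy; simpl; field; apply pow_nonzero; lra).
    assert (Hp : 0 < dy 1 (S m)) by (unfold dy; simpl; apply Rdiv_lt_0_compat; [lra|]; apply Rmult_lt_0_compat; [lra| apply pow_lt; lra]).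
    apply Q_half. exact Hp. rewrite <- E.
    assert (dy 1 m <= 1).
    { assert (H1: 1 <= 2^m) by (apply pow_R1_Rle; lra). unfold dy; simpl INR. unfold Rdiv.
      rewrite Rmult_1_l. rewrite <- Rinv_1. apply Rinv_le_contravar; lra. }
    pose proof (gen_mono psi G (dy 1 m) 1 ltac:(unfold dy; simpl INR; apply Rlt_le, Rdiv_lt_0_compat; [lra|apply pow_lt; lra]) H). lra.
    rewrite <- E. exact IHm.
Qed.

Lemma Q_dy j m : (1 <= j)%nat -> Q (dy j m).
Proof.
  intros Hj. induction j. lia.
  destruct (Nat.eq_dec j 0) as [->|Hne]. apply Q_dy1.
  assert (E : dy (S j) m = dy j m + dy 1 m) by (unfold dy; rewrite S_INR; simpl INR; field; apply pow_nonzero; lra).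
  rewrite E. apply Q_sum.
  unfold dy. apply Rdiv_lt_0_compat. apply lt_0_INR; lia. apply pow_lt; lra.
  unfold dy. apply Rdiv_lt_0_compat. simpl; lra. apply pow_lt; lra.
  apply IHj; lia. apply Q_dy1.
Qed.

Lemma pow2_big (r : R) : exists m, r < 2 ^ m.
Proof.
  destruct (archimed r) as [H _].
  assert (forall m, INR m < 2 ^ m).
  { induction m. simpl; lra. rewrite S_INR. simpl. assert (1 <= 2 ^ m) by (apply pow_R1_Rle; lra). lra. }
  destruct (Rle_lt_dec r 0). exists 0%nat. simpl; lra.
  assert (Hz : (0 <= up r)%Z) by (apply le_IZR; lra).
  exists (Z.to_nat (up r)). specialize (H0 (Z.to_nat (up r))).
  rewrite INR_IZR_INZ, Z2Nat.id in H0 by exact Hz. lra.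
Qed.

Lemma P0_forward : forall z, 0 < z -> Q z.
Proof.
  intros z Hz. unfold Q. apply ul_lim.
  - intros eps He.
    destruct (cont_pt z (eps/2)) as [d0 [Hd0 [Hd0' Hc]]]; try lra.
    destruct (pow2_big (2 / d0)) as [m Hm].
    assert (Hp : 0 < 2 ^ m) by (apply pow_lt; lra).
    set (h := / 2 ^ m).
    assert (Hh : 0 < h /\ h < d0/2).
    { unfold h. split. apply Rinv_0_lt_compat; auto.
      apply (Rmult_lt_reg_l (2^m)); auto. rewrite Rinv_r by lra.
      apply (Rmult_lt_reg_l (2 / d0)). apply Rdiv_lt_0_compat; lra.
      replace (2 / d0 * (2 ^ m * (d0 / 2))) with (2 ^ m) by (field; lra). lra. }
    set (J := up (z / h)).
    destruct (archimed (z/h)) as [HJ1 HJ2]. fold J in HJ1, HJ2.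
    assert (Hzh : 0 < z / h) by (apply Rdiv_lt_0_compat; lra).
    assert (HJ0 : (0 <= J - 1)%Z).
    { apply le_IZR. rewrite minus_IZR. simpl.
      assert (z/h > 2). { apply (Rmult_lt_reg_l h). lra. field_simplify; lra. }
      lra. }
    set (j := Z.to_nat (J - 1)).
    assert (Hj : INR j = IZR J - 1).
    { unfold j. rewrite INR_IZR_INZ, Z2Nat.id by exact HJ0. rewrite minus_IZR. simpl. lra. }
    assert (Ha : dy j m = INR j * h) by (unfold dy, h; field; lra).
    assert (Hja : z - h < INR j * h <= z).
    { rewrite Hj. split.
      - assert (z / h < IZR J) by lra. apply (Rmult_lt_compat_r h) in H; [|lra].
        replace (z / h * h) with z in H by (field; lra). lra.
      - assert (IZR J - 1 <= z / h) by lra. apply (Rmult_le_compat_r h) in H; [|lra].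
        replace (z / h * h) with z in H by (field; lra). lra. }
    assert (Hj1 : (1 <= j)%nat).
    { destruct j. simpl in Hja. lra. lia. }
    pose proof (Q_dy j m Hj1) as Qa. rewrite Ha in Qa.
    assert (Hcl : Rabs (psi (INR j * h) - psi z) < eps/2) by (apply Hc; apply Rabs_lt_between; lra).
    apply Rabs_lt_between in Hcl.
    destruct (ev_lt _ _ (psi (INR j * h) + eps/2) Qa ltac:(lra)) as [N HN].
    exists N. intros n Hn. specialize (HN n Hn).
    assert (psis n z <= psis n (INR j * h)) by (apply (gen_mono _ (Gs n)); lra). lra.
  - intros eps He.
    destruct (cont_pt z (eps/2)) as [d0 [Hd0 [Hd0' Hc]]]; try lra.
    destruct (pow2_big (2 / d0)) as [m Hm].
    assert (Hp : 0 < 2 ^ m) by (apply pow_lt; lra).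
    set (h := / 2 ^ m).
    assert (Hh : 0 < h /\ h < d0/2).
    { unfold h. split. apply Rinv_0_lt_compat; auto.
      apply (Rmult_lt_reg_l (2^m)); auto. rewrite Rinv_r by lra.
      apply (Rmult_lt_reg_l (2 / d0)). apply Rdiv_lt_0_compat; lra.
      replace (2 / d0 * (2 ^ m * (d0 / 2))) with (2 ^ m) by (field; lra). lra. }
    set (J := up (z / h)).
    destruct (archimed (z/h)) as [HJ1 HJ2]. fold J in HJ1, HJ2.
    assert (Hzh : 0 < z / h) by (apply Rdiv_lt_0_compat; lra).
    assert (HJ0 : (0 <= J)%Z) by (apply le_IZR; lra).
    set (j := Z.to_nat J).
    assert (Hj : INR j = IZR J) by (unfold j; rewrite INR_IZR_INZ, Z2Nat.id by exact HJ0; auto).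
    assert (Ha : dy j m = INR j * h) by (unfold dy, h; field; lra).
    assert (Hja : z < INR j * h <= z + h).
    { rewrite Hj. split.
      - apply (Rmult_lt_compat_r h) in HJ1; [|lra].
        replace (z / h * h) with z in HJ1 by (field; lra). lra.
      - assert (IZR J <= z / h + 1) by lra. apply (Rmult_le_compat_r h) in H; [|lra].
        replace ((z / h + 1) * h) with (z + h) in H by (field; lra). lra. }
    assert (Hj1 : (1 <= j)%nat).
    { destruct j. simpl in Hja. lra. lia. }
    pose proof (Q_dy j m Hj1) as Qa. rewrite Ha in Qa.
    assert (Hcl : Rabs (psi (INR j * h) - psi z) < eps/2) by (apply Hc; apply Rabs_lt_between; lra).
    apply Rabs_lt_between in Hcl.
    destruct (ev_gt _ _ (psi (INR j * h) - eps/2) Qa ltac:(lra)) as [N HN].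
    exists N. intros n Hn. specialize (HN n Hn).
    assert (psis n (INR j * h) <= psis n z) by (apply (gen_mono _ (Gs n)); lra). lra.
Qed.
End Forward0.

Lemma mvt_pos (F Hd : R -> R) s t : 0 < s -> s < t ->
  (forall x, s <= x <= t -> is_derive F x (Hd x)) ->
  exists c, s <= c <= t /\ F t - F s = Hd c * (t - s).
Proof.
  intros Hs Hst HD.
  destruct (MVT_gen F s t Hd) as [c [Hc E]].
  - intros x Hx. rewrite Rmin_left, Rmax_right in Hx by lra. apply HD. lra.
  - intros x Hx. rewrite Rmin_left, Rmax_right in Hx by lra.
    apply continuity_pt_filterlim. apply (ex_derive_continuous F x).
    exists (Hd x). apply HD. lra.
  - rewrite Rmin_left, Rmax_right in Hc by lra. exists c. auto.
Qed.

Definition Bounds (g H : R -> R) : Prop :=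
  forall s t, 0 < s -> s < t -> H s * (t - s) <= g t - g s <= H t * (t - s).

Lemma bounds_of_deriv (F G : R -> R) :
  (forall x, 0 < x -> is_derive F x (- G x)) ->
  (forall x y, 0 < x -> x <= y -> G y <= G x) ->
  Bounds F (fun x => - G x).
Proof.
  intros HD HM s t Hs Hst.
  destruct (mvt_pos F (fun x => - G x) s t Hs Hst) as [c [Hc E]].
  intros; apply HD; lra.
  rewrite E. assert (G c <= G s) by (apply HM; lra). assert (G t <= G c) by (apply HM; lra).
  split; apply Rmult_le_compat_r; lra.
Qed.

Definition fj (psi : R -> R) (j : nat) (x : R) : R := (-1) ^ j * Derive_n psi j x.

Fixpoint Bnd (j : nat) (x : R) : R :=
  match j with O => 1 | S j => 2 / x * Bnd j (x / 2) end.

Section Gen.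
Variable d : nat.
Variable psi : R -> R.
Hypothesis Hd : (3 <= d)%nat.
Hypothesis A : ar_generator d psi.

Let k := (d - 2)%nat.

Lemma A_gen : is_generator psi.
Proof. destruct A as [[G _] _]. exact G. Qed.

Lemma A_norm : psi 1 = / 2.
Proof. destruct A as [_ N]. exact N. Qed.

Lemma fj0 x : fj psi 0 x = psi x.
Proof. unfold fj. simpl. ring. Qed.

Lemma fj_deriv j x : (j < k)%nat -> 0 < x -> is_derive (fj psi j) x (- fj psi (S j) x).
Proof.
  intros Hj Hx. destruct A as [[_ [HD _]] _].
  pose proof (Derive_correct _ _ (HD j x Hj Hx)) as H.
  apply (is_derive_scal _ _ ((-1)^j)) in H.
  unfold fj. simpl Derive_n. replace (- ((-1) ^ S j * Derive (Derive_n psi j) x))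
    with ((-1) ^ j * Derive (Derive_n psi j) x) by (simpl; ring).
  exact H.
Qed.

Lemma fk_props :
  (forall x, 0 < x -> 0 <= fj psi k x) /\
  (forall x y, 0 < x -> x <= y -> fj psi k y <= fj psi k x) /\
  (forall x y t, 0 < x -> 0 < y -> 0 <= t <= 1 ->
     fj psi k (t * x + (1 - t) * y) <= t * fj psi k x + (1 - t) * fj psi k y).
Proof. destruct A as [[_ [_ H]] _]. exact H. Qed.

Lemma blow_step i (sg : R) : (i < k)%nat ->
  (exists c, 0 < c /\ exists Y, 0 < Y /\ forall y, Y <= y -> c <= sg * fj psi (S i) y) ->
  forall M, exists Y, 0 < Y /\ forall y, Y <= y -> M <= - sg * fj psi i y.
Proof.
  intros Hi [c [Hc [Y [HY HY']]]] M.
  assert (Hlin : forall y, Y <= y -> - sg * fj psi i Y + c * (y - Y) <= - sg * fj psi i y).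
  { intros y Hy. destruct (Req_dec y Y) as [->|Hne]. lra.
    destruct (mvt_pos (fj psi i) (fun x => - fj psi (S i) x) Y y HY ltac:(lra)) as [xi [Hxi E]].
    intros x Hx. apply fj_deriv; auto; lra.
    specialize (HY' xi ltac:(lra)).
    assert (c * (y - Y) <= sg * fj psi (S i) xi * (y - Y)) by (apply Rmult_le_compat_r; lra).
    replace (- sg * fj psi i y) with (- sg * fj psi i Y - sg * (fj psi i y - fj psi i Y)) by ring.
    rewrite E. lra. }
  exists (Y + Rabs (M + sg * fj psi i Y) / c). split.
  assert (0 <= Rabs (M + sg * fj psi i Y) / c) by (apply Rmult_le_pos; [apply Rabs_pos | left; apply Rinv_0_lt_compat; lra]). lra.
  intros y Hy. assert (0 <= Rabs (M + sg * fj psi i Y) / c) by (apply Rmult_le_pos; [apply Rabs_pos | left; apply Rinv_0_lt_compat; lra]).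
  specialize (Hlin y ltac:(lra)).
  assert (Rabs (M + sg * fj psi i Y) <= c * (y - Y)).
  { replace (Rabs (M + sg * fj psi i Y)) with (c * (Rabs (M + sg * fj psi i Y) / c)) by (field; lra).
    apply Rmult_le_compat_l; lra. }
  pose proof (Rle_abs (M + sg * fj psi i Y)). lra.
Qed.

Lemma blow_all i : forall sg, (i < k)%nat -> (sg = 1 \/ sg = -1) ->
  (exists c, 0 < c /\ exists Y, 0 < Y /\ forall y, Y <= y -> c <= sg * fj psi (S i) y) ->
  exists sg', (sg' = 1 \/ sg' = -1) /\ forall M, exists Y, 0 < Y /\ forall y, Y <= y -> M <= sg' * fj psi 0 y.
Proof.
  induction i; intros sg Hi Hs H.
  - exists (- sg). split. lra. apply blow_step; auto.
  - apply (IHi (- sg)). lia. lra.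
    exists 1. split. lra. apply blow_step; auto.
Qed.

Lemma structure : forall j, (j <= k)%nat ->
  (forall x, 0 < x -> 0 <= fj psi j x) /\
  (forall x y, 0 < x -> x <= y -> fj psi j y <= fj psi j x).
Proof.
  assert (forall t, (t <= k)%nat -> let j := (k - t)%nat in
    (forall x, 0 < x -> 0 <= fj psi j x) /\
    (forall x y, 0 < x -> x <= y -> fj psi j y <= fj psi j x)).
  { induction t; intros Ht j.
    - unfold j. rewrite Nat.sub_0_r. destruct fk_props as (H1 & H2 & _). auto.
    - assert (Hj : (S j = k - t)%nat) by (unfold j; lia).
      destruct (IHt ltac:(lia)) as [N1 M1]. rewrite <- Hj in N1, M1.
      assert (Hjk : (j < k)%nat) by (unfold j; lia).
      assert (Mono : forall x y, 0 < x -> x <= y -> fj psi j y <= fj psi j x).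
      { intros x y Hx Hxy. destruct (Req_dec x y) as [->|Hne]. lra.
        pose proof (bounds_of_deriv (fj psi j) (fj psi (S j)) ltac:(intros; apply fj_deriv; auto) M1 x y Hx ltac:(lra)).
        assert (0 <= fj psi (S j) y) by (apply N1; lra).
        assert (0 <= fj psi (S j) y * (y - x)) by (apply Rmult_le_pos; lra). lra. }
      split; auto.
      intros x0 Hx0. destruct (Rle_lt_dec 0 (fj psi j x0)) as [P|P]; auto. exfalso.
      destruct j as [|i].
      + rewrite fj0 in P. pose proof (gen_range psi A_gen x0). lra.
      + destruct (blow_all i (-1) ltac:(lia) ltac:(lra)) as [sg' [Hs' HB]].
        { exists (- fj psi (S i) x0). split. lra. exists x0. split. auto.
          intros y Hy. pose proof (Mono x0 y Hx0 Hy). lra. }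
        destruct Hs' as [-> | ->].
        * destruct (HB 2) as [Y [HY HY']]. specialize (HY' Y (Rle_refl _)).
          rewrite fj0 in HY'. pose proof (gen_range psi A_gen Y). lra.
        * destruct (HB 1) as [Y [HY HY']]. specialize (HY' Y (Rle_refl _)).
          rewrite fj0 in HY'. pose proof (gen_range psi A_gen Y). lra. }
  intros j Hj. specialize (H (k - j)%nat ltac:(lia)). simpl in H.
  replace (k - (k - j))%nat with j in H by lia. exact H.
Qed.

Lemma bounds_j j : (j < k)%nat -> Bounds (fj psi j) (fun x => - fj psi (S j) x).
Proof.
  intros Hj. apply bounds_of_deriv. intros; apply fj_deriv; auto.
  apply structure. lia.
Qed.

Lemma slope j z W : (1 <= j <= k)%nat -> 0 < z -> z < W ->
  (W - z) * fj psi j W <= fj psi (j - 1) z.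
Proof.
  intros Hj Hz HW. destruct j as [|i]. lia.
  replace (S i - 1)%nat with i by lia.
  pose proof (bounds_j i ltac:(lia) z W Hz HW) as [_ B].
  assert (0 <= fj psi i W) by (apply structure; lia || lra). lra.
Qed.

Lemma f_bnd j x : (j <= k)%nat -> 0 < x -> fj psi j x <= Bnd j x.
Proof.
  revert x. induction j; intros x Hj Hx.
  - simpl. rewrite fj0. apply (gen_range psi A_gen). lra.
  - simpl Bnd. pose proof (slope (S j) (x/2) x ltac:(lia) ltac:(lra) ltac:(lra)) as Sl.
    replace (S j - 1)%nat with j in Sl by lia.
    specialize (IHj (x/2) ltac:(lia) ltac:(lra)).
    replace (fj psi (S j) x) with (2 / x * ((x - x/2) * fj psi (S j) x)) by (field; lra).
    apply Rmult_le_compat_l. apply Rlt_le, Rdiv_lt_0_compat; lra. lra.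
Qed.

End Gen.

Lemma cc_mono (gs : nat -> R -> R) (g : R -> R) z : 0 < z ->
  (forall n x y, 0 < x -> x <= y -> gs n y <= gs n x) ->
  (forall eps, 0 < eps -> exists del, 0 < del /\ forall y, Rabs (y - z) < del -> Rabs (g y - g z) < eps) ->
  (forall x, 0 < x -> is_lim_seq (fun n => gs n x) (g x)) ->
  cont_conv_at gs g z.
Proof.
  intros Hz Hm Hc Hp zs Hzs Hl. apply lim_seq_eps. intros eps He.
  destruct (Hc (eps/2) ltac:(lra)) as [d0 [Hd0 Hd0']].
  set (del := Rmin (d0/2) (z/2)).
  assert (Hdel : 0 < del /\ del <= d0/2 /\ del <= z/2).
  { unfold del. repeat split. apply Rmin_pos; lra. apply Rmin_l. apply Rmin_r. }
  assert (A1 : Rabs (g (z - del) - g z) < eps/2) by (apply Hd0'; apply Rabs_lt_between; lra).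
  assert (A2 : Rabs (g (z + del) - g z) < eps/2) by (apply Hd0'; apply Rabs_lt_between; lra).
  apply Rabs_lt_between in A1. apply Rabs_lt_between in A2.
  destruct (ev2 _ _ (ev_lt _ _ (g (z - del) + eps/2) (Hp (z - del) ltac:(lra)) ltac:(lra))
                    (ev_gt _ _ (g (z + del) - eps/2) (Hp (z + del) ltac:(lra)) ltac:(lra))) as [N1 HN1].
  destruct (ev2 _ _ (ex_intro _ N1 HN1) (lim_seq_eps_inv _ _ Hl del ltac:(lra))) as [N HN].
  exists N. intros n Hn. destruct (HN n Hn) as [[B1 B2] B3]. apply Rabs_lt_between in B3.
  assert (gs n (zs n) <= gs n (z - del)) by (apply Hm; lra).
  assert (gs n (z + del) <= gs n (zs n)) by (apply Hm; [apply Hzs | lra]).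
  apply Rabs_lt_between. lra.
Qed.

Lemma cc_shift (gs : nat -> R -> R) (g : R -> R) :
  (forall z, 0 < z -> cont_conv_at gs g z) ->
  forall zs (z c : R), (forall n, 0 < zs n) -> is_lim_seq zs z -> 0 < z + c ->
  is_lim_seq (fun n => gs n (zs n + c)) (g (z + c)).
Proof.
  intros CC zs z c Hzs Hl Hzc.
  set (ws := fun n => if Rlt_dec 0 (zs n + c) then zs n + c else z + c).
  assert (Hl' : is_lim_seq (fun n => zs n + c) (z + c)).
  { apply is_lim_seq_plus'. exact Hl. apply is_lim_seq_const. }
  destruct (ev_gt _ _ 0 Hl' Hzc) as [N HN].
  assert (Ev : eventually (fun n => ws n = zs n + c)).
  { exists N. intros n Hn. unfold ws. destruct Rlt_dec; auto. specialize (HN n Hn). lra. }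
  assert (Hws : forall n, 0 < ws n) by (intros n; unfold ws; destruct Rlt_dec; lra).
  assert (Hlw : is_lim_seq ws (z + c)).
  { apply is_lim_seq_ext_loc with (fun n => zs n + c). 
    destruct Ev as [M HM]. exists M. intros n Hn. symmetry. apply HM; auto. exact Hl'. }
  pose proof (CC (z + c) Hzc ws Hws Hlw) as H.
  apply is_lim_seq_ext_loc with (fun n => gs n (ws n)); auto.
  destruct Ev as [M HM]. exists M. intros n Hn. rewrite HM; auto.
Qed.

Lemma cc_step (gs Hs : nat -> R -> R) (g H : R -> R) z :
  (forall n, Bounds (gs n) (Hs n)) ->
  (forall z, 0 < z -> cont_conv_at gs g z) -> 0 < z ->
  (forall eps, 0 < eps -> exists h0, 0 < h0 /\ forall h, 0 < h < h0 ->
     Rabs ((g (z + h) - g z) / h - H z) < eps /\ Rabs ((g z - g (z - h)) / h - H z) < eps) ->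
  cont_conv_at Hs H z.
Proof.
  intros B CC Hz Hq zs Hzs Hl. apply lim_seq_eps. intros eps He.
  destruct (Hq (eps/2) ltac:(lra)) as [h0 [Hh0 Hh0']].
  set (h := Rmin (h0/2) (z/2)).
  assert (Hh : 0 < h /\ h <= h0/2 /\ h <= z/2).
  { unfold h. repeat split. apply Rmin_pos; lra. apply Rmin_l. apply Rmin_r. }
  destruct (Hh0' h ltac:(lra)) as [Q1 Q2].
  apply Rabs_lt_between in Q1. apply Rabs_lt_between in Q2.
  pose proof (cc_shift gs g CC zs z h Hzs Hl ltac:(lra)) as L1.
  pose proof (cc_shift gs g CC zs z 0 Hzs Hl ltac:(lra)) as L0.
  pose proof (cc_shift gs g CC zs z (-h) Hzs Hl ltac:(lra)) as L2.
  rewrite Rplus_0_r in L0. apply is_lim_seq_ext with (v := fun n => gs n (zs n)) in L0.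
  2: intros; rewrite Rplus_0_r; auto.
  assert (LB : is_lim_seq (fun n => (gs n (zs n + h) - gs n (zs n)) / h) ((g (z + h) - g z) / h)).
  { apply is_lim_seq_scal_r with (a := / h) in L1. apply is_lim_seq_scal_r with (a := / h) in L0.
    pose proof (is_lim_seq_minus' _ _ _ _ L1 L0). simpl in H0.
    eapply is_lim_seq_ext. 2: replace ((g (z + h) - g z) / h) with (g (z + h) * / h - g z * / h) by (field; lra); exact H0.
    intros; simpl; field; lra. }
  assert (LA : is_lim_seq (fun n => (gs n (zs n) - gs n (zs n + - h)) / h) ((g z - g (z + - h)) / h)).
  { apply is_lim_seq_scal_r with (a := / h) in L2. apply is_lim_seq_scal_r with (a := / h) in L0.
    pose proof (is_lim_seq_minus' _ _ _ _ L0 L2). simpl in H0.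
    eapply is_lim_seq_ext. 2: replace ((g z - g (z + - h)) / h) with (g z * / h - g (z + - h) * / h) by (field; lra); exact H0.
    intros; simpl; field; lra. }
  replace (z + - h) with (z - h) in LA by ring.
  destruct (ev2 _ _ (ev_lt _ _ (H z + eps) LB ltac:(lra)) (ev_gt _ _ (H z - eps) LA ltac:(lra))) as [N1 HN1].
  destruct (ev2 _ _ (ex_intro _ N1 HN1) (lim_seq_eps_inv _ _ Hl (z/2) ltac:(lra))) as [N HN].
  exists N. intros n Hn. destruct (HN n Hn) as [[C1 C2] C3]. apply Rabs_lt_between in C3.
  pose proof (Hzs n) as Pz.
  destruct (B n (zs n) (zs n + h) Pz ltac:(lra)) as [D1 _].
  destruct (B n (zs n + - h) (zs n) ltac:(lra) ltac:(lra)) as [_ D2].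
  replace (zs n + h - zs n) with h in D1 by ring.
  replace (zs n - (zs n + - h)) with h in D2 by ring.
  assert (E1 : Hs n (zs n) <= (gs n (zs n + h) - gs n (zs n)) / h).
  { apply (Rmult_le_reg_r h). lra. unfold Rdiv. rewrite Rmult_assoc, Rinv_l by lra. lra. }
  assert (E2 : (gs n (zs n) - gs n (zs n + - h)) / h <= Hs n (zs n)).
  { apply (Rmult_le_reg_r h). lra. unfold Rdiv. rewrite Rmult_assoc, Rinv_l by lra. lra. }
  apply Rabs_lt_between. lra.
Qed.

Lemma fsum_tele (a : nat -> R) N : fsum (fun i => a (S i) - a i) N = a N - a 0%nat.
Proof. induction N; simpl. ring. rewrite IHN. ring. Qed.

Lemma fsum_shift2 (a : nat -> R) N :
  fsum (fun i => a (S (S i)) - a i) N = a (S N) + a N - a 1%nat - a 0%nat.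
Proof. induction N; simpl. ring. rewrite IHN. ring. Qed.

Lemma fsum_le (f g : nat -> R) N : (forall i, (i < N)%nat -> f i <= g i) -> fsum f N <= fsum g N.
Proof.
  induction N; intros H; simpl. lra.
  assert (fsum f N <= fsum g N) by (apply IHN; intros; apply H; lia).
  assert (f N <= g N) by (apply H; lia). lra.
Qed.

Lemma fsum_scal (f : nat -> R) c N : fsum (fun i => c * f i) N = c * fsum f N.
Proof. induction N; simpl. ring. rewrite IHN. ring. Qed.

Lemma fsum_minus (f g : nat -> R) N : fsum (fun i => f i - g i) N = fsum f N - fsum g N.
Proof. induction N; simpl. ring. rewrite IHN. ring. Qed.

Lemma nat_gt (X : R) : exists N : nat, X < INR N /\ (1 <= N)%nat.
Proof.
  destruct (archimed (Rabs X)) as [H _].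
  assert (Hz : (0 <= up (Rabs X))%Z) by (apply le_IZR; pose proof (Rabs_pos X); lra).
  exists (S (Z.to_nat (up (Rabs X)))). split. 2: lia.
  rewrite S_INR, INR_IZR_INZ, Z2Nat.id by exact Hz. pose proof (Rle_abs X). lra.
Qed.

Lemma bounds_mono (g H : R -> R) : Bounds g H -> forall s t, 0 < s -> s <= t -> H s <= H t.
Proof.
  intros B s t Hs Hst. destruct (Req_dec s t) as [->|E]. lra.
  destruct (B s t Hs ltac:(lra)) as [B1 B2].
  apply (Rmult_le_reg_r (t - s)). lra. lra.
Qed.

Lemma inc_lemma (gs Hs : nat -> R -> R) (g H : R -> R) (Sd : R -> Prop) :
  (forall n, Bounds (gs n) (Hs n)) -> Bounds g H ->
  (forall a b, 0 < a -> a < b -> exists c, a < c < b /\ Sd c) ->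
  (forall c, Sd c -> is_lim_seq (fun n => Hs n c) (H c)) ->
  forall z w, 0 < z -> z < w -> is_lim_seq (fun n => gs n w - gs n z) (g w - g z).
Proof.
  intros Bs B Dense Conv z w Hz Hzw. apply lim_seq_eps. intros eps He.
  set (L := w - z). set (K := H (w + 1) - H (z / 2)).
  assert (HK : 0 <= K) by (unfold K; pose proof (bounds_mono g H B (z/2) (w+1)); lra).
  destruct (nat_gt (2 * L / z + L + 4 * K * L / eps)) as [N [HN HN1]].
  assert (HNp : 0 < INR N) by (apply lt_0_INR; lia).
  set (del := L / INR N).
  assert (Hdp : 0 < del) by (unfold del, L; apply Rdiv_lt_0_compat; lra).
  assert (Hd1 : del < z / 2).
  { unfold del. apply (Rmult_lt_reg_r (INR N)). lra. unfold Rdiv. rewrite Rmult_assoc, Rinv_l by lra.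
    assert (0 <= 4 * K * L / eps) by (unfold L; apply Rmult_le_pos; [apply Rmult_le_pos; lra | left; apply Rinv_0_lt_compat; lra]).
    assert (2 * L / z * (z / 2) = L) by (field; lra).
    assert (2 * L / z < INR N) by (unfold L in *; lra).
    apply (Rmult_lt_compat_r (z/2)) in H2; lra. }
  assert (Hd2 : del < 1).
  { unfold del. apply (Rmult_lt_reg_r (INR N)). lra. unfold Rdiv. rewrite Rmult_assoc, Rinv_l by lra.
    assert (0 <= 4 * K * L / eps) by (unfold L; apply Rmult_le_pos; [apply Rmult_le_pos; lra | left; apply Rinv_0_lt_compat; lra]).
    assert (0 <= 2 * L / z) by (unfold L; apply Rmult_le_pos; [lra | left; apply Rinv_0_lt_compat; lra]).
    lra. }
  assert (Hd3 : 2 * K * del < eps / 2).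
  { unfold del. destruct (Req_dec K 0) as [E|E]. rewrite E. lra.
    assert (4 * K * L / eps < INR N).
    { assert (0 <= 2 * L / z) by (unfold L; apply Rmult_le_pos; [lra | left; apply Rinv_0_lt_compat; lra]).
      unfold L in *; lra. }
    apply (Rmult_lt_compat_r (eps / INR N)) in H0. 2: apply Rdiv_lt_0_compat; lra.
    replace (4 * K * L / eps * (eps / INR N)) with (4 * (K * (L / INR N))) in H0 by (field; lra).
    replace (INR N * (eps / INR N)) with eps in H0 by (field; lra). lra. }
  set (t := fun i : nat => z + INR i * del).
  assert (Hex : forall i : nat, exists c, z + (INR i - 1) * del < c < z + INR i * del /\ Sd c).
  { intros i. apply Dense.
    pose proof (pos_INR i). assert (0 <= INR i * del) by (apply Rmult_le_pos; lra).
    replace (z + (INR i - 1) * del) with (z - del + INR i * del) by ring. lra.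
    replace (z + (INR i - 1) * del) with (z + INR i * del - del) by ring. lra. }
  set (c := fun i => proj1_sig (constructive_indefinite_description _ (Hex i))).
  assert (Hc : forall i, z + (INR i - 1) * del < c i < z + INR i * del /\ Sd (c i)).
  { intros i. unfold c. destruct constructive_indefinite_description as [x Hx]. simpl. exact Hx. }
  assert (Hcpos : forall i, z / 2 < c i).
  { intros i. destruct (Hc i) as [[A1 _] _]. pose proof (pos_INR i).
    assert (0 <= INR i * del) by (apply Rmult_le_pos; lra).
    replace (z + (INR i - 1) * del) with (z - del + INR i * del) in A1 by ring. lra. }
  assert (HtN : t N = w) by (unfold t, del, L; field; lra).
  assert (Ht0 : t 0%nat = z) by (unfold t; simpl; ring).
  assert (Htpos : forall i, z <= t i).
  { intros i. unfold t. pose proof (pos_INR i). assert (0 <= INR i * del) by (apply Rmult_le_pos; lra). lra. }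
  assert (HtS : forall i, t (S i) - t i = del) by (intros i; unfold t; rewrite S_INR; ring).
  assert (Sand : forall (gg HH : R -> R), Bounds gg HH ->
     del * fsum (fun i => HH (c i)) N <= gg w - gg z <= del * fsum (fun i => HH (c (S (S i)))) N).
  { intros gg HH BB. rewrite <- HtN, <- Ht0 at 1. rewrite <- HtN, <- Ht0.
    rewrite <- (fsum_tele (fun i => gg (t i))). rewrite <- !fsum_scal. split; apply fsum_le; intros i Hi.
    - destruct (BB (t i) (t (S i))) as [B1 _]. pose proof (Htpos i); lra. pose proof (HtS i); lra.
      rewrite HtS in B1. destruct (Hc i) as [[_ A2] _].
      pose proof (bounds_mono gg HH BB (c i) (t i) ltac:(pose proof (Hcpos i); lra) ltac:(unfold t; lra)).
      assert (del * HH (c i) <= del * HH (t i)) by (apply Rmult_le_compat_l; lra). lra.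
    - destruct (BB (t i) (t (S i))) as [_ B2]. pose proof (Htpos i); lra. pose proof (HtS i); lra.
      rewrite HtS in B2. pose proof (bounds_mono gg HH BB (t (S i)) (c (S (S i)))) as M.
      destruct (Hc (S (S i))) as [[A1 _] _].
      assert (Hs2 : t (S i) <= c (S (S i))).
      { unfold t. rewrite !S_INR in *. lra. }
      specialize (M ltac:(pose proof (Htpos (S i)); lra) Hs2).
      assert (del * HH (t (S i)) <= del * HH (c (S (S i)))) by (apply Rmult_le_compat_l; lra). lra. }
  set (Aa := del * fsum (fun i => H (c i)) N).
  set (Bb := del * fsum (fun i => H (c (S (S i)))) N).
  assert (Wd : Bb - Aa < eps / 2).
  { unfold Aa, Bb. rewrite <- Rmult_minus_distr_l, <- fsum_minus.
    rewrite (fsum_shift2 (fun i => H (c i))).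
    assert (H (c (S N)) <= H (w + 1)).
    { apply (bounds_mono g H B). pose proof (Hcpos (S N)); lra. destruct (Hc (S N)) as [[_ A2] _].
      rewrite S_INR in A2. assert (z + INR N * del = w) by (rewrite <- HtN; auto). lra. }
    assert (H (c N) <= H (w + 1)).
    { apply (bounds_mono g H B). pose proof (Hcpos N); lra. destruct (Hc N) as [[_ A2] _].
      assert (z + INR N * del = w) by (rewrite <- HtN; auto). lra. }
    assert (H (z / 2) <= H (c 1%nat)) by (apply (bounds_mono g H B); [lra | pose proof (Hcpos 1%nat); lra]).
    assert (H (z / 2) <= H (c 0%nat)) by (apply (bounds_mono g H B); [lra | pose proof (Hcpos 0%nat); lra]).
    assert (del * (H (c (S N)) + H (c N) - H (c 1%nat) - H (c 0%nat)) <= del * (2 * K)).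
    { apply Rmult_le_compat_l. lra. unfold K. lra. }
    lra. }
  assert (LA : is_lim_seq (fun n => del * fsum (fun i => Hs n (c i)) N) Aa).
  { apply (is_lim_seq_scal_l _ del (fsum (fun i => H (c i)) N)).
    apply (fsum_lim (fun n i => Hs n (c i))). intros i _. apply Conv. apply Hc. }
  assert (LB : is_lim_seq (fun n => del * fsum (fun i => Hs n (c (S (S i)))) N) Bb).
  { apply (is_lim_seq_scal_l _ del (fsum (fun i => H (c (S (S i)))) N)).
    apply (fsum_lim (fun n i => Hs n (c (S (S i))))). intros i _. apply Conv. apply Hc. }
  destruct (ev2 _ _ (lim_seq_eps_inv _ _ LA (eps/4) ltac:(lra)) (lim_seq_eps_inv _ _ LB (eps/4) ltac:(lra))) as [M HM].
  exists M. intros n Hn. destruct (HM n Hn) as [C1 C2].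
  apply Rabs_lt_between in C1. apply Rabs_lt_between in C2.
  destruct (Sand (gs n) (Hs n) (Bs n)). destruct (Sand g H B).
  fold Aa Bb in H2, H3.
  apply Rabs_lt_between. lra.
Qed.

Lemma quot_of_deriv (F : R -> R) z l : is_derive F z l ->
  forall eps, 0 < eps -> exists h0, 0 < h0 /\ forall h, 0 < h < h0 ->
     Rabs ((F (z + h) - F z) / h - l) < eps /\ Rabs ((F z - F (z - h)) / h - l) < eps.
Proof.
  intros HD eps He. apply is_derive_Reals in HD.
  destruct (HD eps He) as [[del Hdel] Hd]. exists del. split. auto.
  intros h Hh. split.
  - apply Hd. lra. rewrite Rabs_right; simpl; lra.
  - replace ((F z - F (z - h)) / h) with ((F (z + - h) - F z) / - h).
    apply Hd. lra. rewrite Rabs_left; simpl; lra.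
    replace (z + - h) with (z - h) by ring. field. lra.
Qed.

Lemma cc_opp (gs : nat -> R -> R) (g : R -> R) z :
  cont_conv_at gs g z -> cont_conv_at (fun n x => - gs n x) (fun x => - g x) z.
Proof.
  intros H zs Hzs Hl. specialize (H zs Hzs Hl).
  apply is_lim_seq_opp in H. simpl in H. exact H.
Qed.

Lemma lim_opp (u : nat -> R) (l : R) : is_lim_seq u l -> is_lim_seq (fun n => - u n) (- l).
Proof. intros H. apply is_lim_seq_opp in H. exact H. Qed.

Section Seq.
Variable d : nat.
Variable psi : R -> R.
Variable psis : nat -> R -> R.
Hypothesis Hd : (3 <= d)%nat.
Hypothesis A : ar_generator d psi.
Hypothesis As : forall n, ar_generator d (psis n).

Let k := (d - 2)%nat.

Definition Pj j := forall z, 0 < z -> is_lim_seq (fun n => fj (psis n) j z) (fj psi j z).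

Lemma down_step j : (j <= k)%nat ->
  (forall z w, 0 < z -> z < w ->
     is_lim_seq (fun n => fj (psis n) j w - fj (psis n) j z) (fj psi j w - fj psi j z)) ->
  Pj j.
Proof.
  intros Hj Inc z Hz. destruct j as [|i].
  - assert (N : forall n, fj (psis n) 0 1 = /2) by (intros; rewrite fj0; apply (A_norm d); auto).
    assert (N0 : fj psi 0 1 = /2) by (rewrite fj0; apply (A_norm d); auto).
    destruct (Rtotal_order z 1) as [H|[H|H]].
    + specialize (Inc z 1 Hz H). apply lim_opp in Inc.
      apply is_lim_seq_ext with (fun n => - (fj (psis n) 0 1 - fj (psis n) 0 z) + /2).
      intros n. rewrite N. ring.
      replace (fj psi 0 z) with (- (fj psi 0 1 - fj psi 0 z) + /2) by (rewrite N0; ring).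
      apply is_lim_seq_plus'. exact Inc. apply is_lim_seq_const.
    + subst z. rewrite N0. apply is_lim_seq_ext with (fun _ => /2). intros; rewrite N; auto.
      apply is_lim_seq_const.
    + specialize (Inc 1 z ltac:(lra) H).
      apply is_lim_seq_ext with (fun n => (fj (psis n) 0 z - fj (psis n) 0 1) + /2).
      intros n. rewrite N. ring.
      replace (fj psi 0 z) with ((fj psi 0 z - fj psi 0 1) + /2) by (rewrite N0; ring).
      apply is_lim_seq_plus'. exact Inc. apply is_lim_seq_const.
  - apply lim_seq_eps. intros eps He.
    set (B := Rabs (Bnd i z) + 1).
    assert (HB : 0 < B) by (unfold B; pose proof (Rabs_pos (Bnd i z)); lra).
    set (W := z + 4 * B / eps).
    assert (HW : z < W) by (unfold W; assert (0 < 4 * B / eps) by (apply Rdiv_lt_0_compat; lra); lra).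
    assert (Small : forall f, ar_generator d f -> 0 <= fj f (S i) W <= eps / 4).
    { intros f Af. split. apply (structure d f Hd Af); auto; lra.
      pose proof (slope d f Hd Af (S i) z W ltac:(lia) Hz HW) as Sl.
      replace (S i - 1)%nat with i in Sl by lia.
      pose proof (f_bnd d f Hd Af i z ltac:(lia) Hz).
      pose proof (Rle_abs (Bnd i z)).
      assert ((W - z) * fj f (S i) W <= B) by (unfold B; lra).
      replace (W - z) with (4 * B / eps) in H1 by (unfold W; ring).
      apply (Rmult_le_reg_l (4 * B / eps)). apply Rdiv_lt_0_compat; lra.
      replace (4 * B / eps * (eps / 4)) with B by (field; lra). lra. }
    destruct (lim_seq_eps_inv _ _ (Inc z W Hz HW) (eps/2) ltac:(lra)) as [N HN].
    exists N. intros n Hn. specialize (HN n Hn). apply Rabs_lt_between in HN.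
    pose proof (Small _ (As n)). pose proof (Small _ A).
    apply Rabs_lt_between. lra.
Qed.

Lemma chain_down m : (m <= k)%nat -> Pj m -> Pj 0.
Proof.
  induction m; intros Hm P; auto.
  apply IHm. lia. apply down_step. lia.
  apply (inc_lemma (fun n => fj (psis n) m) (fun n x => - fj (psis n) (S m) x)
     (fj psi m) (fun x => - fj psi (S m) x) (fun x => 0 < x)).
  - intros n. apply (bounds_j d (psis n) Hd (As n)). unfold k in Hm. lia.
  - apply (bounds_j d psi Hd A). unfold k in Hm. lia.
  - intros a b Ha Hab. exists ((a + b)/2). split; lra.
  - intros c Hc. apply lim_opp. apply P. exact Hc.
Qed.

Lemma chain_up : Pj 0 -> forall j, (j <= k)%nat -> forall z, 0 < z ->
  cont_conv_at (fun n => fj (psis n) j) (fj psi j) z.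
Proof.
  intros P0 j. induction j; intros Hj z Hz.
  - apply cc_mono; auto.
    + intros n x y Hx Hxy. apply (proj2 (structure d (psis n) Hd (As n) 0 ltac:(lia))); auto.
    + intros eps He. destruct (gen_cont psi (A_gen d psi A) z eps) as [del [Hdel Hdel']]; try lra.
      exists (Rmin del z). split. apply Rmin_pos; lra. intros y Hy.
      rewrite !fj0. apply Hdel'. apply Rabs_lt_between in Hy.
      pose proof (Rmin_r del z). lra. pose proof (Rmin_l del z). lra.
  - assert (Hjk : (j < k)%nat) by lia.
    pose proof (cc_step (fun n => fj (psis n) j) (fun n x => - fj (psis n) (S j) x)
       (fj psi j) (fun x => - fj psi (S j) x) z) as C.
    assert (C' : cont_conv_at (fun n x => - fj (psis n) (S j) x) (fun x => - fj psi (S j) x) z).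
    { apply C; auto.
      - intros n. apply (bounds_j d (psis n) Hd (As n)). exact Hjk.
      - intros z' Hz'. apply IHj. lia. exact Hz'.
      - apply quot_of_deriv. apply (fj_deriv d psi A). exact Hjk. exact Hz. }
    apply cc_opp in C'. intros zs Hzs Hl. specialize (C' zs Hzs Hl). simpl in C'.
    eapply is_lim_seq_ext. 2: { replace (fj psi (S j) z) with (- - fj psi (S j) z) by ring. exact C'. }
    intros; simpl; ring.
Qed.

End Seq.

Lemma ball_R (x e y : R) : ball x e y <-> Rabs (y - x) < e.
Proof. split; intros H; exact H. Qed.

Lemma lim_of_filterlim (f : R -> R) (F : (R -> Prop) -> Prop) (FF : ProperFilter F) (l : R) :
  filterlim f F (locally l) -> lim (filtermap f F) = l.
Proof.
  intros Hf. set (G := filtermap f F).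
  assert (PG : ProperFilter G) by (apply filtermap_proper_filter; exact FF).
  assert (CG : cauchy G).
  { intros eps. exists l. apply (proj1 (filterlim_locally f l) Hf eps). }
  pose proof (complete_cauchy G PG CG) as HC.
  destruct (Req_dec (lim G) l) as [E|E]. exact E. exfalso.
  assert (Hp : 0 < Rabs (lim G - l) / 3) by (apply Rdiv_lt_0_compat; [apply Rabs_pos_lt; lra | lra]).
  set (e := mkposreal _ Hp).
  pose proof (HC e) as H1. pose proof (proj1 (filterlim_locally f l) Hf e) as H2.
  assert (G (fun y => ball (lim G) e y /\ ball l e y)) by (apply filter_and; auto).
  destruct (Coquelicot.Hierarchy.filter_ex _ H) as [y [Y1 Y2]].
  simpl in Y1, Y2.
  assert (Z1 : Rabs (y - lim G) < Rabs (lim G - l) / 3) by exact Y1.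
  assert (Z2 : Rabs (y - l) < Rabs (lim G - l) / 3) by exact Y2.
  assert (Rabs (lim G - l) <= Rabs (y - lim G) + Rabs (y - l)).
  { replace (lim G - l) with ((y - l) - (y - lim G)) by ring.
    eapply Rle_trans. apply Rabs_triang. rewrite Rabs_Ropp. lra. }
  lra.
Qed.

Section Convex.
Variable g : R -> R.
Hypothesis Cv : forall x y t, 0 < x -> 0 < y -> 0 <= t <= 1 ->
     g (t * x + (1 - t) * y) <= t * g x + (1 - t) * g y.

Definition sl a b := (g b - g a) / (b - a).

Lemma cv_key a b c : 0 < a -> a < b -> b < c -> (c - a) * g b <= (c - b) * g a + (b - a) * g c.
Proof.
  intros Ha Hab Hbc. set (t := (c - b) / (c - a)).
  assert (Ht : 0 <= t <= 1).
  { unfold t. split. apply Rmult_le_pos; [lra | left; apply Rinv_0_lt_compat; lra].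
    apply (Rmult_le_reg_r (c - a)). lra. unfold Rdiv. rewrite Rmult_assoc, Rinv_l; lra. }
  pose proof (Cv a c t Ha ltac:(lra) Ht) as H.
  replace (t * a + (1 - t) * c) with b in H by (unfold t; field; lra).
  apply (Rmult_le_compat_l (c - a)) in H; [|lra].
  replace ((c - a) * (t * g a + (1 - t) * g c)) with ((c - b) * g a + (b - a) * g c) in H
    by (unfold t; field; lra). exact H.
Qed.

Lemma div_le_cross p q r s : 0 < q -> 0 < s -> p * s <= r * q -> p / q <= r / s.
Proof.
  intros Hq Hs H. apply (Rmult_le_reg_r (q * s)). apply Rmult_lt_0_compat; auto.
  replace (p / q * (q * s)) with (p * s) by (field; lra).
  replace (r / s * (q * s)) with (r * q) by (field; lra). exact H.
Qed.

Lemma sl_12_13 a b c : 0 < a -> a < b -> b < c -> sl a b <= sl a c.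
Proof. intros. unfold sl. apply div_le_cross; try lra. pose proof (cv_key a b c H H0 H1). nra. Qed.
Lemma sl_13_23 a b c : 0 < a -> a < b -> b < c -> sl a c <= sl b c.
Proof. intros. unfold sl. apply div_le_cross; try lra. pose proof (cv_key a b c H H0 H1). nra. Qed.
Lemma sl_12_23 a b c : 0 < a -> a < b -> b < c -> sl a b <= sl b c.
Proof. intros. eapply Rle_trans. apply (sl_12_13 a b c); auto. apply sl_13_23; auto. Qed.

Definition LE z := fun v => exists x, 0 < x < z /\ v = sl x z.

Lemma LE_bound z : 0 < z -> bound (LE z).
Proof.
  intros Hz. exists (sl z (z + 1)). intros v [x [Hx ->]]. apply sl_12_23; lra.
Qed.

Lemma LE_ne z : 0 < z -> exists v, LE z v.
Proof. intros Hz. exists (sl (z/2) z). exists (z/2). split; [lra | auto]. Qed.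

Definition Ld (z : R) : R :=
  match Rlt_dec 0 z with
  | left Hz => proj1_sig (completeness (LE z) (LE_bound z Hz) (LE_ne z Hz))
  | right _ => 0
  end.

Lemma Ld_lub z : 0 < z -> is_lub (LE z) (Ld z).
Proof.
  intros Hz. unfold Ld. destruct (Rlt_dec 0 z) as [H|H]. 2: lra.
  destruct completeness as [m Hm]. simpl. exact Hm.
Qed.

Lemma Ld_ge z x : 0 < x < z -> sl x z <= Ld z.
Proof. intros Hx. apply (Ld_lub z ltac:(lra)). exists x. auto. Qed.

Lemma Ld_le z h : 0 < z -> 0 < h -> Ld z <= sl z (z + h).
Proof.
  intros Hz Hh. apply (Ld_lub z Hz). intros v [x [Hx ->]]. apply sl_12_23; lra.
Qed.

Lemma Ld_bounds : Bounds g Ld.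
Proof.
  intros s t Hs Hst. pose proof (Ld_le s (t - s) Hs ltac:(lra)) as H1.
  pose proof (Ld_ge t s ltac:(lra)) as H2.
  replace (s + (t - s)) with t in H1 by ring. unfold sl in *.
  split.
  - apply (Rmult_le_compat_r (t - s)) in H1; [|lra].
    replace ((g t - g s) / (t - s) * (t - s)) with (g t - g s) in H1 by (field; lra). exact H1.
  - apply (Rmult_le_compat_r (t - s)) in H2; [|lra].
    replace ((g t - g s) / (t - s) * (t - s)) with (g t - g s) in H2 by (field; lra). exact H2.
Qed.

Lemma Ld_filterlim z (s : R) : 0 < z -> Rabs s = 1 ->
  filterlim (fun x => (s * g x - s * g z) / (x - z)) (at_left z) (locally (s * Ld z)).
Proof.
  intros Hz Hs. apply filterlim_locally. intros eps.
  destruct (Ld_lub z Hz) as [Hub Hl].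
  assert (Hx0 : exists x0, 0 < x0 < z /\ Ld z - eps < sl x0 z).
  { destruct (classic (exists x0, 0 < x0 < z /\ Ld z - eps < sl x0 z)) as [H|H]; auto.
    exfalso. assert (Ld z <= Ld z - eps).
    { apply Hl. intros v [x [Hx ->]]. destruct (Rle_lt_dec (sl x z) (Ld z - eps)); auto.
      exfalso. apply H. exists x. auto. }
    pose proof (cond_pos eps). lra. }
  destruct Hx0 as [x0 [Hx0 Hsl]].
  assert (Hd : 0 < z - x0) by lra.
  exists (mkposreal _ Hd). intros y Hy0 Hyz.
  assert (Hy : Rabs (y - z) < z - x0) by exact Hy0.
  apply Rabs_lt_between in Hy.
  cut (Rabs ((s * g y - s * g z) / (y - z) - s * Ld z) < eps). intros HH; exact HH.
  assert (Hq : (s * g y - s * g z) / (y - z) = s * sl y z) by (unfold sl; field; lra).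
  rewrite Hq.
  assert (sl x0 z <= sl y z).
  { destruct (Req_dec x0 y) as [->|E]. lra. apply sl_13_23; lra. }
  assert (sl y z <= Ld z) by (apply Ld_ge; lra).
  replace (s * sl y z - s * Ld z) with (s * (sl y z - Ld z)) by ring.
  rewrite Rabs_mult, Hs, Rmult_1_l. apply Rabs_lt_between. lra.
Qed.

End Convex.

Section Dense.
Variable F : R -> R.
Hypothesis Fm : forall s t, 0 < s -> s <= t -> F s <= F t.

Definition step (p : R * R) : R * R :=
  let (l, r) := p in
  let D := (r - l) / 3 in
  if Rle_dec (F (l + D) - F l) (F r - F (r - D)) then (l + D / 4, l + 3 * D / 4)
  else (r - 3 * D / 4, r - D / 4).

Lemma step_spec l r : 0 < l -> l < r ->
  l < fst (step (l, r)) /\ fst (step (l, r)) < snd (step (l, r)) /\ snd (step (l, r)) < r /\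
  F (snd (step (l, r))) - F (fst (step (l, r))) <= (F r - F l) / 2.
Proof.
  intros Hl Hlr. unfold step. cbv zeta. set (D := (r - l) / 3).
  assert (HD : 0 < D) by (unfold D; lra).
  assert (M1 : F l <= F (l + D)) by (apply Fm; lra).
  assert (M2 : F (l + D) <= F (r - D)) by (apply Fm; unfold D in *; lra).
  assert (M3 : F (r - D) <= F r) by (apply Fm; unfold D in *; lra).
  destruct Rle_dec as [C|C]; simpl.
  - assert (F l <= F (l + D / 4)) by (apply Fm; lra).
    assert (F (l + 3 * D / 4) <= F (l + D)) by (apply Fm; lra).
    repeat split; unfold D in *; lra.
  - assert (F (r - D) <= F (r - 3 * D / 4)) by (apply Fm; unfold D in *; lra).
    assert (F (r - D / 4) <= F r) by (apply Fm; unfold D in *; lra).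
    repeat split; unfold D in *; lra.
Qed.

Variable a b : R.
Hypothesis Ha : 0 < a.
Hypothesis Hab : a < b.

Fixpoint it (m : nat) : R * R := match m with O => (a, b) | S m => step (it m) end.

Lemma it_spec m : a <= fst (it m) /\ fst (it m) < snd (it m) /\ snd (it m) <= b /\
  F (snd (it m)) - F (fst (it m)) <= (F b - F a) / 2 ^ m /\
  fst (it m) < fst (it (S m)) /\ snd (it (S m)) < snd (it m).
Proof.
  induction m.
  - destruct (step_spec a b Ha Hab) as (A1 & A2 & A3 & A4).
    change (it 1) with (step (a, b)). change (it 0) with (a, b).
    cbn [fst snd]. change (2 ^ 0) with 1.
    replace ((F b - F a) / 1) with (F b - F a) by field.
    repeat split; lra.
  - destruct IHm as (B1 & B2 & B3 & B4 & B5 & B6).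
    change (it (S (S m))) with (step (it (S m))).
    change (it (S m)) with (step (it m)) in *.
    destruct (it m) as [l r]. cbn [fst snd] in *.
    destruct (step_spec l r ltac:(lra) B2) as (A1 & A2 & A3 & A4).
    destruct (step (l, r)) as [l' r']. cbn [fst snd] in *.
    destruct (step_spec l' r' ltac:(lra) A2) as (C1 & C2 & C3 & C4).
    change (2 ^ S m) with (2 * 2 ^ m).
    assert (0 < 2 ^ m) by (apply pow_lt; lra).
    assert ((F r - F l) / 2 <= (F b - F a) / (2 * 2 ^ m)).
    { replace ((F b - F a) / (2 * 2 ^ m)) with ((F b - F a) / 2 ^ m / 2) by (field; lra). lra. }
    repeat split; lra.
Qed.

Lemma fst_mono i j : (i <= j)%nat -> fst (it i) <= fst (it j).
Proof.
  intros H. induction H. lra. pose proof (it_spec m) as (_ & _ & _ & _ & A & _). lra.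
Qed.

Lemma snd_mono i j : (i <= j)%nat -> snd (it j) <= snd (it i).
Proof.
  intros H. induction H. lra. pose proof (it_spec m) as (_ & _ & _ & _ & _ & A). lra.
Qed.

Lemma nested i m : fst (it i) < snd (it m).
Proof.
  pose proof (fst_mono i (max i m) ltac:(lia)). pose proof (snd_mono m (max i m) ltac:(lia)).
  pose proof (it_spec (max i m)) as (_ & A & _). lra.
Qed.

Lemma dense_cont : exists c, a < c < b /\ continuity_pt F c.
Proof.
  set (E := fun v => exists m, v = fst (it m)).
  assert (Eb : bound E) by (exists b; intros v [m ->]; pose proof (nested m 0); simpl in H; lra).
  assert (Ene : exists v, E v) by (exists a; exists 0%nat; auto).
  destruct (completeness E Eb Ene) as [x [Hub Hl]].
  assert (Hle : forall m, fst (it m) <= x) by (intros m; apply Hub; exists m; auto).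
  assert (Hge : forall m, x <= snd (it m)).
  { intros m. apply Hl. intros v [i ->]. left. apply nested. }
  assert (Hin : forall m, fst (it m) < x < snd (it m)).
  { intros m. pose proof (Hle (S m)). pose proof (Hge (S m)).
    pose proof (it_spec m) as (_ & _ & _ & _ & A & B). lra. }
  exists x. split. apply (Hin 0%nat).
  unfold continuity_pt, continue_in, limit1_in, limit_in. intros eps He. simpl. unfold Rdist.
  destruct (pow2_big ((F b - F a) / eps)) as [m Hm].
  assert (Hp : 0 < 2 ^ m) by (apply pow_lt; lra).
  pose proof (it_spec m) as (A1 & A2 & A3 & A4 & _).
  destruct (Hin m) as [I1 I2].
  exists (Rmin (x - fst (it m)) (snd (it m) - x)). split. apply Rmin_pos; lra.
  intros y [_ Hy]. pose proof (Rmin_l (x - fst (it m)) (snd (it m) - x)).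
  pose proof (Rmin_r (x - fst (it m)) (snd (it m) - x)).
  apply Rabs_lt_between in Hy.
  assert (F (fst (it m)) <= F y) by (apply Fm; lra).
  assert (F y <= F (snd (it m))) by (apply Fm; lra).
  assert (F (fst (it m)) <= F x) by (apply Fm; lra).
  assert (F x <= F (snd (it m))) by (apply Fm; lra).
  assert ((F b - F a) / 2 ^ m < eps).
  { apply (Rmult_lt_reg_r (2 ^ m / eps)). apply Rdiv_lt_0_compat; lra.
    replace ((F b - F a) / 2 ^ m * (2 ^ m / eps)) with ((F b - F a) / eps) by (field; lra).
    replace (eps * (2 ^ m / eps)) with (2 ^ m) by (field; lra). lra. }
  apply Rabs_lt_between. lra.
Qed.
End Dense.

Definition uxy (x y : R) : nat -> R := fun i => match i with O => x | S O => y | _ => 1 end.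

Lemma fsum_uxy (f : R -> R) x y dd : is_generator f -> (2 <= dd)%nat ->
  fsum (fun i => phi f (uxy x y i)) dd = phi f x + phi f y.
Proof.
  intros G. induction dd as [|dd IH]; intros H. lia.
  destruct (Nat.eq_dec dd 1) as [->|Hne]. simpl. ring.
  simpl fsum. rewrite IH by lia. destruct dd as [|[|dd]]; try lia.
  simpl uxy. rewrite (phi_1 f G). ring.
Qed.

Lemma copula_xy (f : R -> R) dd x y : is_generator f -> (2 <= dd)%nat ->
  0 < x <= 1 -> 0 < y <= 1 -> arch_copula dd f (uxy x y) = Tc f x y.
Proof.
  intros G Hd Hx Hy. rewrite (copula_pos f dd (uxy x y) G).
  rewrite fsum_uxy; auto.
  intros i Hi. destruct i as [|[|i]]; simpl; auto; lra.
Qed.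

Lemma uxy_cube dd x y : 0 < x <= 1 -> 0 < y <= 1 -> in_unit_cube dd (uxy x y).
Proof. intros Hx Hy i Hi. destruct i as [|[|i]]; simpl; lra. Qed.

Lemma Dn_fj (f : R -> R) m x : Derive_n f m x = (-1) ^ m * fj f m x.
Proof.
  unfold fj. rewrite <- Rmult_assoc, <- Rpow_mult_distr.
  replace (-1 * -1) with 1 by ring. rewrite pow1. ring.
Qed.

Lemma cc_scal (gs : nat -> R -> R) (g : R -> R) c z :
  cont_conv_at gs g z -> cont_conv_at (fun n x => c * gs n x) (fun x => c * g x) z.
Proof.
  intros H zs Hzs Hl. specialize (H zs Hzs Hl).
  apply (is_lim_seq_scal_l _ c) in H. exact H.
Qed.

Lemma cc_point (gs : nat -> R -> R) (g : R -> R) z : 0 < z ->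
  cont_conv_at gs g z -> is_lim_seq (fun n => gs n z) (g z).
Proof. intros Hz H. apply (H (fun _ => z)). auto. apply is_lim_seq_const. Qed.

Lemma lim_scal (u : nat -> R) (l c : R) : is_lim_seq u l -> is_lim_seq (fun n => c * u n) (c * l).
Proof. intros H. apply (is_lim_seq_scal_l _ c) in H. exact H. Qed.

Lemma quot_of_cont (g H : R -> R) z : Bounds g H -> 0 < z ->
  (forall eps, 0 < eps -> exists del, 0 < del /\ forall y, Rabs (y - z) < del -> Rabs (H y - H z) < eps) ->
  forall eps, 0 < eps -> exists h0, 0 < h0 /\ forall h, 0 < h < h0 ->
     Rabs ((g (z + h) - g z) / h - H z) < eps /\ Rabs ((g z - g (z - h)) / h - H z) < eps.
Proof.
  intros B Hz Hc eps He. destruct (Hc (eps/2) ltac:(lra)) as [del [Hdel Hdel']].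
  exists (Rmin del z). split. apply Rmin_pos; lra. intros h Hh.
  pose proof (Rmin_l del z). pose proof (Rmin_r del z).
  assert (A1 : Rabs (H (z + h) - H z) < eps/2) by (apply Hdel'; rewrite Rabs_right; lra).
  assert (A2 : Rabs (H (z - h) - H z) < eps/2) by (apply Hdel'; rewrite Rabs_left; lra).
  apply Rabs_lt_between in A1. apply Rabs_lt_between in A2.
  destruct (B z (z + h) Hz ltac:(lra)) as [B1 B2].
  destruct (B (z - h) z ltac:(lra) ltac:(lra)) as [B3 B4].
  replace (z + h - z) with h in B1, B2 by ring. replace (z - (z - h)) with h in B3, B4 by ring.
  assert (Q1 : H z <= (g (z + h) - g z) / h <= H (z + h)).
  { split; apply (Rmult_le_reg_r h); try lra; unfold Rdiv; rewrite Rmult_assoc, Rinv_l; lra. }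
  assert (Q2 : H (z - h) <= (g z - g (z - h)) / h <= H z).
  { split; apply (Rmult_le_reg_r h); try lra; unfold Rdiv; rewrite Rmult_assoc, Rinv_l; lra. }
  split; apply Rabs_lt_between; lra.
Qed.

Section Main.
Variable d : nat.
Hypothesis Hd : (3 <= d)%nat.

Definition cvx (f : R -> R) (Af : ar_generator d f) := proj2 (proj2 (fk_props d f Af)).
Definition Lf (f : R -> R) (Af : ar_generator d f) := Ld (fj f (d - 2)) (cvx f Af).

Lemma LD_eq f (Af : ar_generator d f) z : 0 < z ->
  left_deriv (Derive_n f (d - 2)) z = (-1) ^ (d - 2) * Lf f Af z.
Proof.
  intros Hz. unfold left_deriv, Lf. apply lim_of_filterlim. apply at_left_proper_filter.
  eapply filterlim_ext. 2: apply (Ld_filterlim _ (cvx f Af) z ((-1) ^ (d - 2)) Hz (pow_1_abs _)).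
  intros x. simpl. rewrite !Dn_fj. reflexivity.
Qed.

Lemma Lf_bounds f Af : Bounds (fj f (d - 2)) (Lf f Af).
Proof. apply Ld_bounds. Qed.

Lemma cont_LD_Lf f Af z : 0 < z -> continuous (left_deriv (Derive_n f (d - 2))) z ->
  forall eps, 0 < eps -> exists del, 0 < del /\ forall y, Rabs (y - z) < del ->
    Rabs (Lf f Af y - Lf f Af z) < eps.
Proof.
  intros Hz Hc eps He. apply continuity_pt_filterlim in Hc.
  destruct (Hc eps He) as [del [Hdel Hdel']].
  exists (Rmin del z). split. apply Rmin_pos; lra. intros y Hy.
  pose proof (Rmin_l del z). pose proof (Rmin_r del z).
  destruct (Req_dec y z) as [->|Hne]. rewrite Rminus_eq_0, Rabs_R0. lra.
  assert (Hy0 : 0 < y) by (apply Rabs_lt_between in Hy; lra).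
  specialize (Hdel' y). simpl in Hdel'. unfold Rdist in Hdel'.
  rewrite (LD_eq f Af y Hy0), (LD_eq f Af z Hz) in Hdel'.
  replace ((-1) ^ (d - 2) * Lf f Af y - (-1) ^ (d - 2) * Lf f Af z)
    with ((-1) ^ (d - 2) * (Lf f Af y - Lf f Af z)) in Hdel' by ring.
  rewrite Rabs_mult, pow_1_abs, Rmult_1_l in Hdel'. apply Hdel'. split. unfold D_x, no_cond. auto. lra.
Qed.

Lemma cont_Lf_LD f Af z : 0 < z -> continuity_pt (Lf f Af) z ->
  continuous (left_deriv (Derive_n f (d - 2))) z.
Proof.
  intros Hz Hc. apply continuity_pt_filterlim.
  intros eps He. destruct (Hc eps He) as [del [Hdel Hdel']].
  exists (Rmin del z). split. apply Rmin_pos; lra. intros y [_ Hy]. simpl in *. unfold Rdist in *.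
  pose proof (Rmin_l del z). pose proof (Rmin_r del z).
  assert (Hy0 : 0 < y) by (apply Rabs_lt_between in Hy; lra).
  rewrite (LD_eq f Af y Hy0), (LD_eq f Af z Hz).
  replace ((-1) ^ (d - 2) * Lf f Af y - (-1) ^ (d - 2) * Lf f Af z)
    with ((-1) ^ (d - 2) * (Lf f Af y - Lf f Af z)) by ring.
  rewrite Rabs_mult, pow_1_abs, Rmult_1_l.
  destruct (Req_dec y z) as [->|Hne]. rewrite Rminus_eq_0, Rabs_R0. lra.
  apply Hdel'. split. unfold D_x, no_cond. auto. lra.
Qed.

End Main.

Theorem lemma4p4 (d : nat) (psi : R -> R) (psis : nat -> R -> R) :
  (3 <= d)%nat ->
  ar_generator d psi ->
  (forall n, ar_generator d (psis n)) ->
  let Cn := fun n => arch_copula d (psis n) in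
  let C := arch_copula d psi in
  let LD := left_deriv (Derive_n psi (d - 2)) in
  let LDn := fun n => left_deriv (Derive_n (psis n) (d - 2)) in
  let ContLD := fun z => 0 < z /\ continuous LD z in
  (* forward direction *)
  ((forall u, in_unit_cube d u -> is_lim_seq (fun n => Cn n u) (C u)) ->
     (forall m, (m <= d - 2)%nat ->
        (forall z, 0 < z ->
           is_lim_seq (fun n => Derive_n (psis n) m z) (Derive_n psi m z)) /\
        (forall z, 0 < z ->
           cont_conv_at (fun n => Derive_n (psis n) m) (Derive_n psi m) z)) /\
     (forall z, ContLD z -> is_lim_seq (fun n => LDn n z) (LD z)) /\
     (forall z, ContLD z -> cont_conv_at LDn LD z)) /\
  (* converse via derivatives of order m in {1,...,d-2} *)
  (forall m, (1 <= m <= d - 2)%nat ->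
     (forall z, 0 < z ->
        is_lim_seq (fun n => Derive_n (psis n) m z) (Derive_n psi m z)) ->
     forall u, in_unit_cube d u -> is_lim_seq (fun n => Cn n u) (C u)) /\
  (* converse via left derivatives of order d-2 *)
  ((forall z, ContLD z -> is_lim_seq (fun n => LDn n z) (LD z)) ->
     forall u, in_unit_cube d u -> is_lim_seq (fun n => Cn n u) (C u)).
Proof.
  intros Hd A As. cbv zeta.
  set (s := (-1) ^ (d - 2)).
  assert (G : is_generator psi) by exact (A_gen d psi A).
  assert (Gs : forall n, is_generator (psis n)) by (intros n; exact (A_gen d (psis n) (As n))).
  assert (ToCop : Pj psi psis 0 -> forall u, in_unit_cube d u ->
     is_lim_seq (fun n => arch_copula d (psis n) u) (arch_copula d psi u)).
  { intros P u Hu. apply copula_conv; auto. intros z Hz. specialize (P z Hz).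
    eapply is_lim_seq_ext. intros n. apply fj0. rewrite <- (fj0 psi z). exact P. }
  assert (LDcc : Pj psi psis 0 -> forall z, 0 < z /\ continuous (left_deriv (Derive_n psi (d - 2))) z ->
      cont_conv_at (fun n => left_deriv (Derive_n (psis n) (d - 2))) (left_deriv (Derive_n psi (d - 2))) z).
  { intros P z [Hz Hc].
    pose proof (cc_step (fun n => fj (psis n) (d - 2)) (fun n => Lf d (psis n) (As n))
       (fj psi (d - 2)) (Lf d psi A) z) as C.
    assert (C' : cont_conv_at (fun n => Lf d (psis n) (As n)) (Lf d psi A) z).
    { apply C; auto.
      - intros n. apply Lf_bounds.
      - intros z' Hz'. apply (chain_up d psi psis Hd A As P). lia. exact Hz'.
      - apply quot_of_cont; auto. apply Lf_bounds. apply cont_LD_Lf; auto. }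
    intros zs Hzs Hl. specialize (C' zs Hzs Hl).
    apply (lim_scal _ _ s) in C'.
    eapply is_lim_seq_ext. 2: { rewrite (LD_eq d psi A z Hz). exact C'. }
    intros n. simpl. rewrite (LD_eq d (psis n) (As n) (zs n) (Hzs n)). reflexivity. }
  split; [|split].
  -
    intros HC.
    assert (HT : forall x y, 0 < x <= 1 -> 0 < y <= 1 ->
       is_lim_seq (fun n => Tc (psis n) x y) (Tc psi x y)).
    { intros x y Hx Hy. specialize (HC (uxy x y) (uxy_cube d x y Hx Hy)).
      rewrite (copula_xy psi d x y G) in HC by (auto; lia).
      eapply is_lim_seq_ext. 2: exact HC. intros n. simpl. apply copula_xy; auto. lia. }
    assert (P0 : Pj psi psis 0).
    { intros z Hz. pose proof (P0_forward psi psis G Gs HT (A_norm d psi A)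
         (fun n => A_norm d (psis n) (As n)) z Hz) as Q0. unfold Q in Q0.
      rewrite fj0. apply is_lim_seq_ext with (fun n => psis n z). intros n; rewrite fj0; auto. exact Q0. }
    assert (CCm : forall m, (m <= d - 2)%nat -> forall z, 0 < z ->
       cont_conv_at (fun n => Derive_n (psis n) m) (Derive_n psi m) z).
    { intros m Hm z Hz.
      pose proof (cc_scal _ _ ((-1) ^ m) z (chain_up d psi psis Hd A As P0 m Hm z Hz)) as H.
      intros zs Hzs Hl. specialize (H zs Hzs Hl). simpl in H.
      rewrite Dn_fj. apply is_lim_seq_ext with (fun n => (-1) ^ m * fj (psis n) m (zs n)).
      intros n; rewrite Dn_fj; auto. exact H. }
    split; [|split].
    + intros m Hm. split; intros z Hz.
      apply (cc_point (fun n => Derive_n (psis n) m) (Derive_n psi m) z Hz). apply CCm; auto. apply CCm; auto.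
    + intros z Hz. apply (cc_point (fun n => left_deriv (Derive_n (psis n) (d - 2))) (left_deriv (Derive_n psi (d - 2))) z). apply Hz. apply LDcc; auto.
    + intros z Hz. apply LDcc; auto.
  -
    intros m Hm Hconv. apply ToCop.
    apply (chain_down d psi psis Hd A As m). lia.
    intros z Hz. specialize (Hconv z Hz). apply (lim_scal _ _ ((-1) ^ m)) in Hconv.
    exact Hconv.
  -
    intros Hconv. apply ToCop.
    apply (chain_down d psi psis Hd A As (d - 2)). lia.
    apply (down_step d psi psis Hd A As). lia.
    apply (inc_lemma (fun n => fj (psis n) (d - 2)) (fun n => Lf d (psis n) (As n))
       (fj psi (d - 2)) (Lf d psi A)
       (fun z => 0 < z /\ continuous (left_deriv (Derive_n psi (d - 2))) z)).
    + intros n. apply Lf_bounds.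
    + apply Lf_bounds.
    + intros a b Ha Hab.
      destruct (dense_cont (Lf d psi A) (bounds_mono _ _ (Lf_bounds d psi A)) a b Ha Hab)
        as [c [Hc Hcc]].
      exists c. split. exact Hc. split. lra. apply (cont_Lf_LD d psi A); auto. lra.
    + intros c [Hc Hcc]. specialize (Hconv c (conj Hc Hcc)).
      apply (lim_scal _ _ s) in Hconv.
      eapply is_lim_seq_ext. 2: {
        rewrite (LD_eq d psi A c Hc) in Hconv.
        replace (s * ((-1) ^ (d - 2) * Lf d psi A c)) with (Lf d psi A c) in Hconv.
        exact Hconv. unfold s. rewrite <- Rmult_assoc, <- Rpow_mult_distr.
        replace (-1 * -1) with 1 by ring. rewrite pow1. ring. }
      intros n. simpl. rewrite (LD_eq d (psis n) (As n) c Hc). unfold s.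
      rewrite <- Rmult_assoc, <- Rpow_mult_distr.
      replace (-1 * -1) with 1 by ring. rewrite pow1. ring.
Qed.
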